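(* Let $\Omega\subseteq\mathbb R^d$, $F$ and $\mathcal I$ be as below, and suppose the PDE $F(x,V(x),DV(x),D^2V(x),[\mathcal IV](x))=0$ on $\overline\Omega$ satisfies the comparison principle. Let $(S,\mathcal I^h)_{h>0}$ be a numerical scheme that is monotone, stable, nonlocally consistent, and satisfies the technical condition (T). For each $h>0$ let $V^h\in B(\overline\Omega)$ be a solution of the scheme, i.e. $S(h,x,V^h,[\mathcal I^hV^h](x))=0$ for all $x\in\overline\Omega$. Then, as $h\to0$, $V^h$ converges locally uniformly on $\overline\Omega$ to the unique bounded viscosity solution of the PDE.
   Context: $\mathcal S^d$ is the set of real symmetric $d\times d$ matrices; $B(\overline\Omega)$ the bounded real functions on $\overline\Omega$. $F:\overline\Omega\times\mathbb R\times\mathbb R^d\times\mathcal S^d\times\mathbb R\to\mathbb R$ is locally bounded and $\mathcal I$ maps $B(\overline\Omega)$ into real functions on $\overline\Omega$. $C^2(\overline\Omega)$ means functions that are $C^2$ on a neighbourhood of $\overline\Omega$. For a locally bounded $u$ on a metric space, $u^*(x)=\limsup_{y\to x}u(y)$ and $u_*(x)=\liminf_{y\to x}u(y)$; $F^*,F_*$ are the envelopes of $F$ in all its arguments. An upper (resp. lower) semicontinuous $V:\overline\Omega\to\mathbb R$ is a viscosity subsolution (resp. supersolution) if for every $\varphi\in C^2(\overline\Omega)$ and $x\in\overline\Omega$ at which $V-\varphi$ has a local maximum (resp. minimum) relative to $\overline\Omega$, $F_*(x,V(x),D\varphi(x),D^2\varphi(x),[\mathcal IV](x))\le0$ (resp.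 $F^*(\ldots)\ge0$); a viscosity solution is both. Comparison principle: whenever $U,V\in B(\overline\Omega)$ are a subsolution and supersolution, $U\le V$. A scheme is a pair of maps $S:(0,\infty)\times\overline\Omega\times B(\overline\Omega)\times\mathbb R\to\mathbb R$ and $\mathcal I^h:B(\overline\Omega)\to B(\overline\Omega)$. Monotone: $S(h,x,V,\ell)\le S(h,x,\hat V,\ell)$ whenever $V\ge\hat V$ and $V(x)=\hat V(x)$. Stable: there is $C$ with $\|V^h\|_\infty\le C$ for every solution $V^h$ of the scheme and every $h$. Half-relaxed limits of a locally bounded family $(u^h)$: $\overline u(x)=\limsup_{h\to0,y\to x}u^h(y)$, $\underline u(x)=\liminf_{h\to0,y\to x}u^h(y)$. Nonlocally consistent: for every uniformly bounded family $(u^h)_{h>0}\subset B(\overline\Omega)$, every $\varphi\in C^2(\overline\Omega)$ and $x\in\overline\Omega$, $\liminf_{h\to0,y\to x,\xi\to0}S(h,y,\varphi+\xi,[\mathcal I^hu^h](y))\ge F_*(x,\varphi(x),D\varphi(x),D^2\varphi(x),[\mathcal I\overline u](x))$ and $\limsup_{h\to0,y\to x,\xi\to0}S(h,y,\varphi+\xi,[\mathcal I^hu^h](y))\le F^*(x,\varphi(x),D\varphi(x),D^2\varphi(x),[\mathcal I\underline u](x))$ ($\xi$ ranges over real constants). (T): there is $f:(0,\infty)\times\overline\Omega\to[0,\infty)$ with $\lim_{h\to0,y\to x}f(y,h)=0$ for all $x$ and $|S(h,x,\psi,\ell)-S(h,x,\varphi,\ell)|\le f(x,h)$ for all $h,x,\ell$,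 $\varphi\in B(\overline\Omega)$ and $\psi=\varphi\pm e^{-1/h}\mathbf 1_{\{x\}}$. *)

(* Defs.v *)
From Stdlib Require Import Reals Lra ClassicalEpsilon.
Open Scope R_scope.

Fixpoint sumR (n : nat) (f : nat -> R) : R :=
  match n with O => 0 | S k => sumR k f + f k end.

(** R^d: coordinate sequences vanishing from index d on. *)
Definition Rd (d : nat) := {x : nat -> R | forall i, (d <= i)%nat -> x i = 0}.

(** S^d: real symmetric d x d matrices (entries vanishing outside d x d). *)
Definition Sym (d : nat) :=
  {M : nat -> nat -> R |
     (forall i j, M i j = M j i) /\ (forall i j, (d <= i)%nat -> M i j = 0)}.

Definition vnorm (d : nat) (x : nat -> R) : R :=
  sqrt (sumR d (fun i => x i ^ 2)).
Definition mnorm (d : nat) (M : nat -> nat -> R) : R :=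
  sqrt (sumR d (fun i => sumR d (fun j => M i j ^ 2))).

Definition vdist {d : nat} (x y : Rd d) : R :=
  vnorm d (fun i => proj1_sig x i - proj1_sig y i).
Definition mdist {d : nat} (M N : Sym d) : R :=
  mnorm d (fun i j => proj1_sig M i j - proj1_sig N i j).

Definition closure {d : nat} (Om : Rd d -> Prop) (x : Rd d) : Prop :=
  forall eps, 0 < eps -> exists y, Om y /\ vdist x y < eps.

Definition Clos {d : nat} (Om : Rd d -> Prop) := {x : Rd d | closure Om x}.

Definition cdist {d : nat} {Om : Rd d -> Prop} (x y : Clos Om) : R :=
  vdist (proj1_sig x) (proj1_sig y).

Definition bnd {d : nat} {Om : Rd d -> Prop} (u : Clos Om -> R) : Prop :=
  exists C, forall x, Rabs (u x) <= C.

Definition is_limsup {T : Type} (near : R -> T -> Prop) (f : T -> R) (L : R) : Prop :=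
  (forall eps, 0 < eps ->
     exists delta, 0 < delta /\ forall w, near delta w -> f w < L + eps) /\
  (forall eps delta, 0 < eps -> 0 < delta ->
     exists w, near delta w /\ L - eps < f w).

(** The (finite) limsup value; junk value if the limsup is not finite. *)
Definition limsup_val {T : Type} (near : R -> T -> Prop) (f : T -> R) : R :=
  epsilon (inhabits 0) (fun L => is_limsup near f L).
Definition liminf_val {T : Type} (near : R -> T -> Prop) (f : T -> R) : R :=
  - limsup_val near (fun w => - f w).

(** liminf f >= c and limsup f <= c (in the extended reals). *)
Definition liminf_ge {T : Type} (near : R -> T -> Prop) (f : T -> R) (c : R) : Prop :=
  forall eps, 0 < eps ->
    exists delta, 0 < delta /\ forall w, near delta w -> c - eps < f w.
Definition limsup_le {T : Type} (near : R -> T -> Prop) (f : T -> R) (c : R) : Prop :=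
  forall eps, 0 < eps ->
    exists delta, 0 < delta /\ forall w, near delta w -> f w < c + eps.

Definition Farg {d : nat} (Om : Rd d -> Prop) :=
  (Clos Om * R * Rd d * Sym d * R)%type.

Definition near_arg {d : nat} {Om : Rd d -> Prop}
  (x : Clos Om) (r : R) (p : Rd d) (M : Sym d) (l : R)
  (delta : R) (w : Farg Om) : Prop :=
  match w with (x', r', p', M', l') =>
    cdist x' x < delta /\ Rabs (r' - r) < delta /\ vdist p' p < delta /\
    mdist M' M < delta /\ Rabs (l' - l) < delta
  end.

Definition Funcurry {d : nat} {Om : Rd d -> Prop}
  (F : Clos Om -> R -> Rd d -> Sym d -> R -> R) (w : Farg Om) : R :=
  match w with (x', r', p', M', l') => F x' r' p' M' l' end.

Definition Fupper {d : nat} {Om : Rd d -> Prop}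
  (F : Clos Om -> R -> Rd d -> Sym d -> R -> R)
  (x : Clos Om) (r : R) (p : Rd d) (M : Sym d) (l : R) : R :=
  limsup_val (near_arg x r p M l) (Funcurry F).
Definition Flower {d : nat} {Om : Rd d -> Prop}
  (F : Clos Om -> R -> Rd d -> Sym d -> R -> R)
  (x : Clos Om) (r : R) (p : Rd d) (M : Sym d) (l : R) : R :=
  liminf_val (near_arg x r p M l) (Funcurry F).

Definition locally_bounded {d : nat} {Om : Rd d -> Prop}
  (F : Clos Om -> R -> Rd d -> Sym d -> R -> R) : Prop :=
  forall x r p M l, exists delta C, 0 < delta /\
    forall w, near_arg x r p M l delta w -> Rabs (Funcurry F w) <= C.

Definition ropen {d : nat} (U : Rd d -> Prop) : Prop :=
  forall x, U x -> exists r, 0 < r /\ forall y, vdist y x < r -> U y.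

Definition has_grad {d : nat} (phi : Rd d -> R) (Dphi : Rd d -> Rd d) (x : Rd d) : Prop :=
  forall eps, 0 < eps -> exists delta, 0 < delta /\ forall y, vdist y x < delta ->
    Rabs (phi y - phi x
          - sumR d (fun i => proj1_sig (Dphi x) i * (proj1_sig y i - proj1_sig x i)))
    <= eps * vdist y x.

Definition has_hess {d : nat} (Dphi : Rd d -> Rd d) (D2phi : Rd d -> Sym d) (x : Rd d) : Prop :=
  forall eps, 0 < eps -> exists delta, 0 < delta /\ forall y, vdist y x < delta ->
    vnorm d (fun i => proj1_sig (Dphi y) i - proj1_sig (Dphi x) i
                 - sumR d (fun j => proj1_sig (D2phi x) i j * (proj1_sig y j - proj1_sig x j)))
    <= eps * vdist y x.

Definition cont_sym {d : nat} (D2phi : Rd d -> Sym d) (x : Rd d) : Prop :=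
  forall eps, 0 < eps -> exists delta, 0 < delta /\ forall y, vdist y x < delta ->
    mdist (D2phi y) (D2phi x) < eps.

Definition C2_closure {d : nat} (Om : Rd d -> Prop) (phi : Rd d -> R)
  (Dphi : Rd d -> Rd d) (D2phi : Rd d -> Sym d) : Prop :=
  exists U : Rd d -> Prop, ropen U /\ (forall x, closure Om x -> U x) /\
    forall x, U x -> has_grad phi Dphi x /\ has_hess Dphi D2phi x /\ cont_sym D2phi x.

Definition usc {d : nat} {Om : Rd d -> Prop} (V : Clos Om -> R) : Prop :=
  forall x eps, 0 < eps -> exists delta, 0 < delta /\
    forall y, cdist y x < delta -> V y < V x + eps.
Definition lsc {d : nat} {Om : Rd d -> Prop} (V : Clos Om -> R) : Prop :=
  forall x eps, 0 < eps -> exists delta, 0 < delta /\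
    forall y, cdist y x < delta -> V x - eps < V y.

Definition loc_max {d : nat} {Om : Rd d -> Prop} (u : Clos Om -> R) (x : Clos Om) : Prop :=
  exists r, 0 < r /\ forall y, cdist y x < r -> u y <= u x.
Definition loc_min {d : nat} {Om : Rd d -> Prop} (u : Clos Om -> R) (x : Clos Om) : Prop :=
  exists r, 0 < r /\ forall y, cdist y x < r -> u x <= u y.

Definition visc_sub {d : nat} {Om : Rd d -> Prop}
  (F : Clos Om -> R -> Rd d -> Sym d -> R -> R)
  (I : (Clos Om -> R) -> (Clos Om -> R)) (V : Clos Om -> R) : Prop :=
  usc V /\
  forall phi Dphi D2phi, C2_closure Om phi Dphi D2phi ->
  forall x : Clos Om, loc_max (fun y => V y - phi (proj1_sig y)) x ->
    Flower F x (V x) (Dphi (proj1_sig x)) (D2phi (proj1_sig x)) (I V x) <= 0.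

Definition visc_super {d : nat} {Om : Rd d -> Prop}
  (F : Clos Om -> R -> Rd d -> Sym d -> R -> R)
  (I : (Clos Om -> R) -> (Clos Om -> R)) (V : Clos Om -> R) : Prop :=
  lsc V /\
  forall phi Dphi D2phi, C2_closure Om phi Dphi D2phi ->
  forall x : Clos Om, loc_min (fun y => V y - phi (proj1_sig y)) x ->
    Fupper F x (V x) (Dphi (proj1_sig x)) (D2phi (proj1_sig x)) (I V x) >= 0.

Definition visc_sol {d : nat} {Om : Rd d -> Prop} F I (V : Clos Om -> R) : Prop :=
  visc_sub F I V /\ visc_super F I V.

Definition comparison {d : nat} {Om : Rd d -> Prop}
  (F : Clos Om -> R -> Rd d -> Sym d -> R -> R)
  (I : (Clos Om -> R) -> (Clos Om -> R)) : Prop :=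
  forall U V : Clos Om -> R, bnd U -> bnd V -> visc_sub F I U -> visc_super F I V ->
    forall x, U x <= V x.

Definition scheme_sol {d : nat} {Om : Rd d -> Prop}
  (S : R -> Clos Om -> (Clos Om -> R) -> R -> R)
  (Ih : R -> (Clos Om -> R) -> (Clos Om -> R)) (h : R) (V : Clos Om -> R) : Prop :=
  bnd V /\ forall x, S h x V (Ih h V x) = 0.

Definition monotone {d : nat} {Om : Rd d -> Prop}
  (S : R -> Clos Om -> (Clos Om -> R) -> R -> R) : Prop :=
  forall h x (V Vh : Clos Om -> R) l, 0 < h -> bnd V -> bnd Vh ->
    (forall y, Vh y <= V y) -> V x = Vh x -> S h x V l <= S h x Vh l.

Definition stable {d : nat} {Om : Rd d -> Prop}
  (S : R -> Clos Om -> (Clos Om -> R) -> R -> R)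
  (Ih : R -> (Clos Om -> R) -> (Clos Om -> R)) : Prop :=
  exists C, forall h V, 0 < h -> scheme_sol S Ih h V -> forall x, Rabs (V x) <= C.

Definition near_hy {d : nat} {Om : Rd d -> Prop} (x : Clos Om) (delta : R)
  (w : R * Clos Om) : Prop :=
  0 < fst w < delta /\ cdist (snd w) x < delta.

Definition hr_sup {d : nat} {Om : Rd d -> Prop} (u : R -> Clos Om -> R) (x : Clos Om) : R :=
  limsup_val (near_hy x) (fun w => u (fst w) (snd w)).
Definition hr_inf {d : nat} {Om : Rd d -> Prop} (u : R -> Clos Om -> R) (x : Clos Om) : R :=
  liminf_val (near_hy x) (fun w => u (fst w) (snd w)).

Definition near_hyxi {d : nat} {Om : Rd d -> Prop} (x : Clos Om) (delta : R)
  (w : R * Clos Om * R) : Prop :=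
  match w with (h, y, xi) => 0 < h < delta /\ cdist y x < delta /\ Rabs xi < delta end.

Definition nonloc_consistent {d : nat} {Om : Rd d -> Prop}
  (F : Clos Om -> R -> Rd d -> Sym d -> R -> R)
  (I : (Clos Om -> R) -> (Clos Om -> R))
  (S : R -> Clos Om -> (Clos Om -> R) -> R -> R)
  (Ih : R -> (Clos Om -> R) -> (Clos Om -> R)) : Prop :=
  forall u : R -> Clos Om -> R,
  (exists C, forall h x, 0 < h -> Rabs (u h x) <= C) ->
  forall phi Dphi D2phi, C2_closure Om phi Dphi D2phi ->
  forall x : Clos Om,
    liminf_ge (near_hyxi x)
      (fun w => match w with (h, y, xi) =>
         S h y (fun z => phi (proj1_sig z) + xi) (Ih h (u h) y) end)
      (Flower F x (phi (proj1_sig x)) (Dphi (proj1_sig x)) (D2phi (proj1_sig x))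
              (I (hr_sup u) x))
    /\
    limsup_le (near_hyxi x)
      (fun w => match w with (h, y, xi) =>
         S h y (fun z => phi (proj1_sig z) + xi) (Ih h (u h) y) end)
      (Fupper F x (phi (proj1_sig x)) (Dphi (proj1_sig x)) (D2phi (proj1_sig x))
              (I (hr_inf u) x)).

Definition ind {d : nat} {Om : Rd d -> Prop} (x y : Clos Om) : R :=
  if excluded_middle_informative (y = x) then 1 else 0.

Definition condT {d : nat} {Om : Rd d -> Prop}
  (S : R -> Clos Om -> (Clos Om -> R) -> R -> R) : Prop :=
  exists f : R -> Clos Om -> R,
    (forall h x, 0 < h -> 0 <= f h x) /\
    (forall x eps, 0 < eps -> exists delta, 0 < delta /\
        forall h y, 0 < h < delta -> cdist y x < delta -> f h y < eps) /\
    (forall h x l (phi : Clos Om -> R) (s : R), 0 < h -> bnd phi -> (s = 1 \/ s = -1) ->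
       Rabs (S h x (fun y => phi y + s * exp (- / h) * ind x y) l - S h x phi l)
       <= f h x).

Definition loc_unif_conv {d : nat} {Om : Rd d -> Prop}
  (Vh : R -> Clos Om -> R) (V : Clos Om -> R) : Prop :=
  forall x : Clos Om, exists r, 0 < r /\
    forall eps, 0 < eps -> exists h0, 0 < h0 /\
      forall h y, 0 < h < h0 -> cdist y x < r -> Rabs (Vh h y - V y) < eps.

(* Main.v *)
Require Import Defs.
From Stdlib Require Import Reals Lra Lia ClassicalEpsilon Classical FunctionalExtensionality ProofIrrelevance.
Open Scope R_scope.

Lemma sumR_ext n f g : (forall i, (i < n)%nat -> f i = g i) -> sumR n f = sumR n g.
Proof. induction n; simpl; intros H; auto. rewrite IHn by (intros; apply H; lia). rewrite H by lia. auto. Qed.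

Lemma sumR_plus n f g : sumR n (fun i => f i + g i) = sumR n f + sumR n g.
Proof. induction n; simpl; [lra|]. rewrite IHn. lra. Qed.

Lemma sumR_scal n c f : sumR n (fun i => c * f i) = c * sumR n f.
Proof. induction n; simpl; [lra|]. rewrite IHn. lra. Qed.

Lemma sumR_zero n : sumR n (fun _ => 0) = 0.
Proof. induction n; simpl; [lra|]. rewrite IHn. lra. Qed.

Lemma sumR_const n c : sumR n (fun _ => c) = INR n * c.
Proof. induction n; simpl sumR; [simpl; lra|]. rewrite IHn, S_INR. lra. Qed.

Lemma sumR_le n f g : (forall i, (i < n)%nat -> f i <= g i) -> sumR n f <= sumR n g.
Proof. induction n; simpl; intros H; [lra|]. assert (H1 := H n ltac:(lia)).
  assert (sumR n f <= sumR n g) by (apply IHn; intros; apply H; lia). lra. Qed.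

Lemma sumR_nonneg n f : (forall i, (i < n)%nat -> 0 <= f i) -> 0 <= sumR n f.
Proof. intros H. rewrite <- (sumR_zero n). apply sumR_le. auto. Qed.

Lemma sumR_single n f i : (forall j, (j < n)%nat -> 0 <= f j) -> (i < n)%nat -> f i <= sumR n f.
Proof. induction n; intros H Hi; [lia|]. simpl.
  assert (0 <= sumR n f) by (apply sumR_nonneg; intros; apply H; lia).
  destruct (Nat.eq_dec i n). subst. lra.
  assert (f i <= sumR n f) by (apply IHn; [intros; apply H; lia| lia]). assert (0 <= f n) by (apply H; lia). lra. Qed.

Lemma sumR_abs n f : Rabs (sumR n f) <= sumR n (fun i => Rabs (f i)).
Proof. induction n; simpl. rewrite Rabs_R0; lra.
  eapply Rle_trans; [apply Rabs_triang|]. lra. Qed.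

Lemma CS n a b : (sumR n (fun i => a i * b i))^2 <= sumR n (fun i => a i ^ 2) * sumR n (fun i => b i ^2).
Proof. induction n; cbn [sumR]. lra.
  set (P := sumR n (fun i => a i * b i)) in *.
  set (A := sumR n (fun i => a i ^2)) in *.
  set (B := sumR n (fun i => b i ^2)) in *.
  assert (HA : 0 <= A) by (apply sumR_nonneg; intros; nra).
  assert (HB : 0 <= B) by (apply sumR_nonneg; intros; nra).
  assert (Hs : Rabs P <= sqrt A * sqrt B).
  { rewrite <- sqrt_mult by auto. rewrite <- (sqrt_pow2 (Rabs P)) by apply Rabs_pos.
    apply sqrt_le_1_alt. rewrite pow2_abs. auto. }
  assert (HsA := sqrt_sqrt A HA). assert (HsB := sqrt_sqrt B HB).
  assert (0 <= sqrt A) by apply sqrt_pos. assert (0 <= sqrt B) by apply sqrt_pos.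
  assert (2 * Rabs P * Rabs (a n * b n) <= A * b n ^2 + B * a n ^2).
  { rewrite Rabs_mult. assert (0 <= Rabs (a n)) by apply Rabs_pos. assert (0 <= Rabs (b n)) by apply Rabs_pos.
    assert (Rabs (a n) ^2 = a n ^2) by apply pow2_abs.
    assert (Rabs (b n) ^2 = b n ^2) by apply pow2_abs.
    assert (2 * Rabs P * (Rabs (a n) * Rabs (b n)) <= 2 * (sqrt A * sqrt B) * (Rabs (a n) * Rabs (b n))) by
      (apply Rmult_le_compat_r; [nra| lra]).
    assert (Q: 0 <= (sqrt A * Rabs (b n) - sqrt B * Rabs (a n))^2) by apply pow2_ge_0.
    assert (E: (sqrt A * Rabs (b n) - sqrt B * Rabs (a n))^2 = (sqrt A * sqrt A) * Rabs (b n)^2 + (sqrt B * sqrt B) * Rabs (a n)^2 - 2 * (sqrt A * sqrt B) * (Rabs (a n) * Rabs (b n))) by ring.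
    rewrite E, HsA, HsB, !pow2_abs in Q. lra. }
  assert (P * (a n * b n) <= Rabs P * Rabs (a n * b n)).
  { rewrite <- Rabs_mult. apply Rle_abs. }
  assert (E1: (P + a n * b n)^2 = P^2 + 2*(P*(a n*b n)) + (a n*b n)^2) by ring.
  assert (E2: (A + a n^2)*(B+b n^2) = A*B + (A*b n^2 + B*a n^2) + (a n * b n)^2) by ring.
  rewrite E1, E2. lra. Qed.

Section Norms.
Variable d : nat.

Lemma vnorm_nonneg v : 0 <= vnorm d v.
Proof. apply sqrt_pos. Qed.

Lemma vsum_nonneg v : 0 <= sumR d (fun i => v i ^ 2).
Proof. apply sumR_nonneg; intros; nra. Qed.

Lemma vnorm_sq v : vnorm d v ^ 2 = sumR d (fun i => v i ^ 2).
Proof. unfold vnorm. apply pow2_sqrt. apply vsum_nonneg. Qed.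

Lemma vnorm_ext v w : (forall i, (i < d)%nat -> v i = w i) -> vnorm d v = vnorm d w.
Proof. intros H. unfold vnorm. f_equal. apply sumR_ext. intros; rewrite H; auto. Qed.

Lemma vnorm_zero : vnorm d (fun _ => 0) = 0.
Proof. unfold vnorm. rewrite (sumR_ext _ _ (fun _ => 0)). rewrite sumR_zero. apply sqrt_0.
  intros; simpl; ring. Qed.

Lemma vnorm_opp v : vnorm d (fun i => - v i) = vnorm d v.
Proof. unfold vnorm. f_equal. apply sumR_ext. intros; ring. Qed.



Lemma vnorm_triangle v w : vnorm d (fun i => v i + w i) <= vnorm d v + vnorm d w.
Proof.
  assert (H1 := vnorm_nonneg v). assert (H2 := vnorm_nonneg w).
  unfold vnorm at 1. rewrite <- (sqrt_pow2 (vnorm d v + vnorm d w)) by lra.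
  apply sqrt_le_1_alt.
  rewrite (sumR_ext _ _ (fun i => v i ^2 + w i ^2 + 2 * (v i * w i))) by (intros; ring).
  rewrite !sumR_plus, sumR_scal.
  assert (HC := CS d v w).
  rewrite <- (vnorm_sq v), <- (vnorm_sq w) in HC |- *.
  set (P := sumR d (fun i => v i * w i)) in *.
  assert (Rabs P <= vnorm d v * vnorm d w).
  { rewrite <- (sqrt_pow2 (vnorm d v * vnorm d w)) by nra.
    rewrite <- (sqrt_pow2 (Rabs P)) by apply Rabs_pos. apply sqrt_le_1_alt.
    rewrite pow2_abs. nra. }
  assert (P <= Rabs P) by apply Rle_abs. nra.
Qed.

Lemma coord_le v i : (i < d)%nat -> Rabs (v i) <= vnorm d v.
Proof. intros Hi. unfold vnorm. rewrite <- (sqrt_pow2 (Rabs (v i))) by apply Rabs_pos. apply sqrt_le_1_alt.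
  rewrite pow2_abs. apply (sumR_single d (fun i => v i ^2)); auto. intros; nra. Qed.

Lemma vnorm_bound v c : 0 <= c -> (forall i, (i < d)%nat -> Rabs (v i) <= c) -> vnorm d v <= INR d * c.
Proof. intros Hc H. unfold vnorm. assert (0 <= INR d) by apply pos_INR.
  rewrite <- (sqrt_pow2 (INR d * c)) by nra. apply sqrt_le_1_alt.
  apply Rle_trans with (sumR d (fun _ => c^2)).
  apply sumR_le. intros i Hi. specialize (H i Hi). rewrite <- pow2_abs.
  apply pow_incr; split; [apply Rabs_pos| auto].
  rewrite sumR_const. destruct (Nat.eq_dec d 0) as [E|Hd]. rewrite E; simpl; lra.
  assert (1 <= INR d) by (apply (le_INR 1); lia). assert (0 <= c^2) by nra.
  replace ((INR d * c)^2) with (INR d * INR d * c^2) by ring. apply Rmult_le_compat_r; nra.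
Qed.

Lemma dot_bound b h : Rabs (sumR d (fun j => b j * h j)) <= sumR d (fun j => Rabs (b j)) * vnorm d h.
Proof. eapply Rle_trans; [apply sumR_abs|]. rewrite Rmult_comm, <- sumR_scal.
  apply sumR_le. intros. rewrite Rabs_mult. rewrite Rmult_comm. apply Rmult_le_compat_r. apply Rabs_pos.
  apply coord_le; auto. Qed.

Lemma mcoord_le M i j : (i < d)%nat -> (j < d)%nat -> Rabs (M i j) <= mnorm d M.
Proof. intros Hi Hj. unfold mnorm. rewrite <- (sqrt_pow2 (Rabs (M i j))) by apply Rabs_pos. apply sqrt_le_1_alt.
  rewrite pow2_abs.
  eapply Rle_trans; [| apply (sumR_single d (fun i => sumR d (fun j => M i j ^2)) i)]; auto.
  apply (sumR_single d (fun j => M i j ^2)); auto. intros; nra.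
  intros; apply sumR_nonneg; intros; nra. Qed.

Lemma mnorm_bound M c : 0 <= c -> (forall i j, (i < d)%nat -> (j < d)%nat -> Rabs (M i j) <= c) -> mnorm d M <= INR d * c.
Proof. intros Hc H. unfold mnorm. assert (0 <= INR d) by apply pos_INR.
  rewrite <- (sqrt_pow2 (INR d * c)) by nra. apply sqrt_le_1_alt.
  apply Rle_trans with (sumR d (fun _ => INR d * c^2)).
  apply sumR_le. intros i Hi. rewrite <- sumR_const. apply sumR_le. intros j Hj. specialize (H i j Hi Hj).
  rewrite <- pow2_abs.
  apply pow_incr; split; [apply Rabs_pos| auto].
  rewrite sumR_const. nra.
Qed.
End Norms.

Lemma abs_le_inv x C : Rabs x <= C -> -C <= x <= C.
Proof. unfold Rabs; destruct Rcase_abs; lra. Qed.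
Lemma abs_le_intro x C : -C <= x <= C -> Rabs x <= C.
Proof. unfold Rabs; destruct Rcase_abs; lra. Qed.
Lemma abs_lt_inv x C : Rabs x < C -> -C < x < C.
Proof. unfold Rabs; destruct Rcase_abs; lra. Qed.
Lemma abs_lt_intro x C : -C < x < C -> Rabs x < C.
Proof. unfold Rabs; destruct Rcase_abs; lra. Qed.

Section Dist.
Variable d : nat.

Lemma vdist_sym (x y : Rd d) : vdist x y = vdist y x.
Proof. unfold vdist. rewrite <- vnorm_opp. apply vnorm_ext. intros; ring. Qed.

Lemma vdist_refl (x : Rd d) : vdist x x = 0.
Proof. unfold vdist. rewrite <- (vnorm_zero d). apply vnorm_ext. intros; ring. Qed.

Lemma vdist_tri (x y z : Rd d) : vdist x z <= vdist x y + vdist y z.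
Proof. unfold vdist. eapply Rle_trans; [|apply vnorm_triangle]. right. apply vnorm_ext. intros; ring. Qed.

Lemma vdist_nonneg (x y : Rd d) : 0 <= vdist x y.
Proof. apply vnorm_nonneg. Qed.

Variable Om : Rd d -> Prop.

Lemma cdist_sym (x y : Clos Om) : cdist x y = cdist y x.
Proof. apply vdist_sym. Qed.
Lemma cdist_refl (x : Clos Om) : cdist x x = 0.
Proof. apply vdist_refl. Qed.
Lemma cdist_tri (x y z : Clos Om) : cdist x z <= cdist x y + cdist y z.
Proof. apply vdist_tri. Qed.
Lemma cdist_nonneg (x y : Clos Om) : 0 <= cdist x y.
Proof. apply vdist_nonneg. Qed.

Lemma closure_closed (z : Rd d) : (forall eps, 0 < eps -> exists y : Clos Om, vdist z (proj1_sig y) < eps) -> closure Om z.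
Proof. intros H eps He. destruct (H (eps/2)) as [[y Hy] Hzy]; [lra|]. simpl in Hzy.
  destruct (Hy (eps/2)) as [o [Ho Hyo]]; [lra|]. exists o. split; auto.
  assert (T := vdist_tri z y o). lra. Qed.
End Dist.
Arguments vdist_sym {d}. Arguments vdist_refl {d}. Arguments vdist_tri {d}. Arguments vdist_nonneg {d}.
Arguments cdist_sym {d Om}. Arguments cdist_refl {d Om}. Arguments cdist_tri {d Om}. Arguments cdist_nonneg {d Om}.
Arguments closure_closed {d Om}.

Section Limsup.
Context {T : Type} (near : R -> T -> Prop).
Hypothesis near_mono : forall dl dl' w, dl <= dl' -> near dl w -> near dl' w.
Hypothesis near_ne : forall dl, 0 < dl -> exists w, near dl w.

Lemma limsup_exists f : (exists dl0 C, 0 < dl0 /\ forall w, near dl0 w -> Rabs (f w) <= C) ->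
  exists L, is_limsup near f L.
Proof.
  intros [d0 [C [Hd0 HC]]].
  set (E := fun v => exists dl, 0 < dl <= d0 /\ forall w, near dl w -> f w <= - v).
  assert (Hb : bound E).
  { exists C. intros v [dl [Hdl Hw]]. destruct (near_ne dl) as [w Hw']; [lra|].
    specialize (Hw w Hw'). assert (near d0 w) by (apply (near_mono dl); [lra|auto]).
    specialize (HC w H). apply abs_le_inv in HC. lra. }
  assert (Hn : exists v, E v).
  { exists (- C). exists d0. split; [lra|]. intros w Hw. specialize (HC w Hw). apply abs_le_inv in HC. lra. }
  destruct (completeness E Hb Hn) as [m [Hm1 Hm2]].
  exists (- m). split.
  - intros eps He. destruct (classic (exists v, E v /\ m - eps < v)) as [[v [[dl [Hdl Hw]] Hv]]|Hno].
    + exists dl. split; [lra|]. intros w Hw'. specialize (Hw w Hw'). lra.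
    + exfalso. assert (m <= m - eps). { apply Hm2. intros v Ev. destruct (Rle_dec v (m - eps)); auto.
        exfalso. apply Hno. exists v. split; auto. lra. } lra.
  - intros eps dl He Hdl. apply NNPP. intros Hno.
    assert (E (m + eps)).
    { exists (Rmin dl d0). split. split. apply Rmin_pos; lra. apply Rmin_r.
      intros w Hw. destruct (Rle_dec (f w) (- (m + eps))); auto. exfalso. apply Hno. exists w. split.
      apply (near_mono (Rmin dl d0)); auto. apply Rmin_l. lra. }
    specialize (Hm1 _ H). lra.
Qed.

Lemma limsup_unique f L1 L2 : is_limsup near f L1 -> is_limsup near f L2 -> L1 = L2.
Proof.
  assert (forall L1 L2, is_limsup near f L1 -> is_limsup near f L2 -> L1 < L2 -> False).
  { intros a b [Ha1 Ha2] [Hb1 Hb2] Hab. destruct (Ha1 ((b - a)/2)) as [dl [Hdl Hw]]; [lra|].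
    destruct (Hb2 ((b-a)/2) dl) as [w [Hw1 Hw2]]; [lra|auto|]. specialize (Hw w Hw1). lra. }
  intros H1 H2. destruct (Rtotal_order L1 L2) as [Hl|[Hl|Hl]]; auto.
  exfalso; eauto. exfalso; eauto. Qed.

Lemma limsup_val_spec f L : is_limsup near f L -> limsup_val near f = L.
Proof. intros H. unfold limsup_val. apply (limsup_unique f). 2: auto.
  apply (epsilon_spec (inhabits 0) (fun L => is_limsup near f L)). exists L; auto. Qed.

Lemma limsup_bound f L C dl0 : 0 < dl0 -> is_limsup near f L -> (forall w, near dl0 w -> Rabs (f w) <= C) -> Rabs L <= C.
Proof. intros Hd [H1 H2] HC. apply Rabs_le. split.
  - apply Rnot_lt_le. intros Hlt. destruct (H1 (-C - L)) as [dl [Hdl Hw]]; [lra|].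
    destruct (near_ne (Rmin dl dl0)) as [w Hw']. apply Rmin_pos; lra.
    assert (near dl w) by (apply (near_mono (Rmin dl dl0)); [apply Rmin_l|auto]).
    assert (near dl0 w) by (apply (near_mono (Rmin dl dl0)); [apply Rmin_r|auto]).
    specialize (Hw w H). specialize (HC w H0). apply abs_le_inv in HC. lra.
  - apply Rnot_lt_le. intros Hlt. destruct (H2 (L - C) dl0) as [w [Hw1 Hw2]]; [lra|lra|].
    specialize (HC w Hw1). apply abs_le_inv in HC. lra.
Qed.

Lemma limsup_ge_liminf f L1 L2 : is_limsup near f L1 -> is_limsup near (fun w => - f w) L2 -> - L2 <= L1.
Proof. intros [H1 _] [H2 _]. apply Rnot_lt_le. intros Hlt.
  destruct (H1 ((-L2 - L1)/2)) as [a [Ha Hwa]]; [lra|].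
  destruct (H2 ((-L2 - L1)/2)) as [b [Hb Hwb]]; [lra|].
  destruct (near_ne (Rmin a b)) as [w Hw]. apply Rmin_pos; lra.
  assert (near a w) by (apply (near_mono (Rmin a b)); [apply Rmin_l|auto]).
  assert (near b w) by (apply (near_mono (Rmin a b)); [apply Rmin_r|auto]).
  specialize (Hwa w H). specialize (Hwb w H0). lra. Qed.
End Limsup.

Section HR.
Variable d : nat.
Variable Om : Rd d -> Prop.

Lemma near_hy_mono (x : Clos Om) dl dl' w : dl <= dl' -> near_hy x dl w -> near_hy x dl' w.
Proof. unfold near_hy. intros. lra. Qed.
Lemma near_hy_ne (x : Clos Om) dl : 0 < dl -> exists w, near_hy x dl w.
Proof. intros H. exists (dl/2, x). unfold near_hy. simpl. rewrite cdist_refl. lra. Qed.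

Variable u : R -> Clos Om -> R.
Variable C : R.
Hypothesis Hu : forall h x, 0 < h -> Rabs (u h x) <= C.

Lemma hr_sup_spec x : is_limsup (near_hy x) (fun w => u (fst w) (snd w)) (hr_sup u x).
Proof. unfold hr_sup. destruct (limsup_exists (near_hy x) (near_hy_mono x) (near_hy_ne x) (fun w => u (fst w) (snd w))) as [L HL].
  exists 1, C. split; [lra|]. intros [h y] [Hh _]. simpl in *. apply Hu. lra.
  rewrite (limsup_val_spec _ _ _ HL). auto. Qed.

Lemma hr_inf_spec x : is_limsup (near_hy x) (fun w => - u (fst w) (snd w)) (- hr_inf u x).
Proof. unfold hr_inf, liminf_val. rewrite Ropp_involutive.
  destruct (limsup_exists (near_hy x) (near_hy_mono x) (near_hy_ne x) (fun w => - u (fst w) (snd w))) as [L HL].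
  exists 1, C. split; [lra|]. intros [h y] [Hh _]. simpl in *. rewrite Rabs_Ropp. apply Hu. lra.
  rewrite (limsup_val_spec _ _ _ HL). auto. Qed.

Lemma hr_sup_bound x : Rabs (hr_sup u x) <= C.
Proof. apply (limsup_bound (near_hy x) (near_hy_mono x) (near_hy_ne x) (fun w => u (fst w) (snd w)) _ C 1); [lra| apply hr_sup_spec|].
  intros [h y] [Hh _]. simpl in *. apply Hu. lra. Qed.

Lemma hr_inf_bound x : Rabs (hr_inf u x) <= C.
Proof. rewrite <- Rabs_Ropp. apply (limsup_bound (near_hy x) (near_hy_mono x) (near_hy_ne x) (fun w => - u (fst w) (snd w)) _ C 1); [lra| apply hr_inf_spec|].
  intros [h y] [Hh _]. simpl in *. rewrite Rabs_Ropp. apply Hu. lra. Qed.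

Lemma hr_inf_le_sup x : hr_inf u x <= hr_sup u x.
Proof. assert (H := limsup_ge_liminf (near_hy x) (near_hy_mono x) (near_hy_ne x) _ _ _ (hr_sup_spec x) (hr_inf_spec x)).
  lra. Qed.

Lemma near_hy_shift (x y : Clos Om) dl w : cdist y x < dl / 2 -> near_hy y (dl/2) w -> near_hy x dl w.
Proof. unfold near_hy. intros H [H1 H2]. split. lra. assert (T := cdist_tri (snd w) y x). lra. Qed.

Lemma hr_sup_usc : usc (hr_sup u).
Proof. intros x eps He. destruct (proj1 (hr_sup_spec x) (eps/2)) as [dl [Hdl Hw]]; [lra|].
  exists (dl/2). split; [lra|]. intros y Hy.
  destruct (proj2 (hr_sup_spec y) (eps/2) (dl/2)) as [w [Hw1 Hw2]]; [lra|lra|].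
  specialize (Hw w (near_hy_shift x y dl w Hy Hw1)). lra. Qed.

Lemma hr_inf_lsc : lsc (hr_inf u).
Proof. intros x eps He. destruct (proj1 (hr_inf_spec x) (eps/2)) as [dl [Hdl Hw]]; [lra|].
  exists (dl/2). split; [lra|]. intros y Hy.
  destruct (proj2 (hr_inf_spec y) (eps/2) (dl/2)) as [w [Hw1 Hw2]]; [lra|lra|].
  specialize (Hw w (near_hy_shift x y dl w Hy Hw1)). lra. Qed.

End HR.

Lemma small_inv dl : 0 < dl -> exists N : nat, / (INR N + 1) < dl.
Proof. intros H. destruct (INR_unbounded (/ dl)) as [N HN]. exists N.
  assert (0 <= INR N) by apply pos_INR. assert (0 < / dl) by (apply Rinv_0_lt_compat; auto).
  rewrite <- (Rinv_inv dl). apply Rinv_lt_contravar. apply Rmult_lt_0_compat; lra. lra. Qed.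

Lemma inv_mono (n m : nat) : (n <= m)%nat -> / (INR m + 1) <= / (INR n + 1).
Proof. intros H. apply le_INR in H. assert (0 <= INR n) by apply pos_INR.
  apply Rinv_le_contravar; lra. Qed.

Definition conv (a : nat -> R) (l : R) := forall eps, 0 < eps -> exists N, forall n, (N <= n)%nat -> Rabs (a n - l) < eps.
Definition sinc (phi : nat -> nat) := forall n, (phi n < phi (S n))%nat.

Lemma sinc_ge phi : sinc phi -> forall n, (n <= phi n)%nat.
Proof. intros H n; induction n. lia. specialize (H n). lia. Qed.

Lemma sinc_mono phi : sinc phi -> forall n m, (n <= m)%nat -> (phi n <= phi m)%nat.
Proof. intros H n m Hnm. induction Hnm. lia. specialize (H m). lia. Qed.

Lemma sinc_comp phi psi : sinc phi -> sinc psi -> sinc (fun n => phi (psi n)).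
Proof. intros H1 H2 n. assert (H := H2 n). assert (forall a b, (a < b)%nat -> (phi a < phi b)%nat).
  { intros a b Hab. induction Hab. apply H1. specialize (H1 m). lia. } auto. Qed.

Lemma conv_sub a l phi : sinc phi -> conv a l -> conv (fun n => a (phi n)) l.
Proof. intros Hs Hc eps He. destruct (Hc eps He) as [N HN]. exists N. intros n Hn. apply HN.
  assert (T := sinc_ge phi Hs n). lia. Qed.

Lemma bw1 (a : nat -> R) B : (forall n, Rabs (a n) <= B) -> exists phi l, sinc phi /\ conv (fun n => a (phi n)) l.
Proof. intros HB.
  destruct (Bolzano_Weierstrass a (fun c => -B <= c <= B) (compact_P3 (-B) B)) as [l Hl].
  { intros n. apply abs_le_inv. auto. }
  assert (G : forall k N : nat, {p : nat | (N <= p)%nat /\ Rabs (a p - l) < / (INR k + 1)}).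
  { intros k N. apply constructive_indefinite_description.
    assert (Hpos : 0 < / (INR k + 1)). { apply Rinv_0_lt_compat. assert (0 <= INR k) by apply pos_INR. lra. }
    destruct (Hl (disc l (mkposreal _ Hpos)) N) as [p [Hp1 Hp2]].
    exists (mkposreal _ Hpos). intros y Hy; auto.
    exists p. split; auto. }
  set (phi := fix phi k := match k with O => proj1_sig (G O O) | S k' => proj1_sig (G (S k') (S (phi k'))) end).
  exists phi, l. split.
  - intros n. change (phi (S n)) with (proj1_sig (G (S n) (S (phi n)))). destruct (proj2_sig (G (S n) (S (phi n)))) as [Hp _]. lia.
  - intros eps He. destruct (small_inv eps He) as [N HN]. exists N. intros n Hn.
    assert (Rabs (a (phi n) - l) < / (INR n + 1)).
    { destruct n. change (phi 0%nat) with (proj1_sig (G 0%nat 0%nat)). apply (proj2_sig (G 0%nat 0%nat)).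
      change (phi (S n)) with (proj1_sig (G (S n) (S (phi n)))). apply (proj2_sig (G (S n) (S (phi n)))). }
    assert (T := inv_mono N n Hn). lra.
Qed.

Lemma bwk (y : nat -> nat -> R) : (forall i, exists B, forall n, Rabs (y n i) <= B) ->
  forall k, exists phi z, sinc phi /\ forall i, (i < k)%nat -> conv (fun n => y (phi n) i) (z i).
Proof. intros HB k. induction k.
  - exists (fun n => n), (fun _ => 0). split. intros n; lia. intros; lia.
  - destruct IHk as [phi [z [Hs Hc]]]. destruct (HB k) as [B HBk].
    destruct (bw1 (fun n => y (phi n) k) B) as [psi [l [Hps Hcl]]]. intros; apply HBk.
    exists (fun n => phi (psi n)), (fun i => if Nat.eq_dec i k then l else z i). split.
    apply sinc_comp; auto. intros i Hi. destruct (Nat.eq_dec i k). subst. auto.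
    apply (conv_sub (fun n => y (phi n) i)); auto. apply Hc. lia.
Qed.

Lemma conv_unif (a : nat -> nat -> R) (z : nat -> R) k : (forall i, (i < k)%nat -> conv (fun n => a n i) (z i)) ->
  forall eps, 0 < eps -> exists N, forall n i, (N <= n)%nat -> (i < k)%nat -> Rabs (a n i - z i) < eps.
Proof. induction k; intros H eps He. exists O; intros; lia.
  destruct (IHk (fun i Hi => H i ltac:(lia)) eps He) as [N1 HN1].
  destruct (H k ltac:(lia) eps He) as [N2 HN2]. exists (max N1 N2). intros n i Hn Hi.
  destruct (Nat.eq_dec i k). subst. apply HN2; lia. apply HN1; lia. Qed.

Section BWd.
Variable d : nat.

Definition trunc (z : nat -> R) : Rd d.
Proof. exists (fun i => if Compare_dec.lt_dec i d then z i else 0). intros i Hi. destruct (Compare_dec.lt_dec i d); auto; lia. Defined.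

Lemma bwd (y : nat -> Rd d) : (forall i, exists B, forall n, Rabs (proj1_sig (y n) i) <= B) ->
  exists phi (z : Rd d), sinc phi /\ forall eps, 0 < eps -> exists N, forall n, (N <= n)%nat -> vdist (y (phi n)) z < eps.
Proof. intros HB. destruct (bwk (fun n i => proj1_sig (y n) i) HB d) as [phi [z [Hs Hc]]].
  exists phi, (trunc z). split; auto. intros eps He.
  assert (0 <= INR d) by apply pos_INR.
  destruct (conv_unif (fun n i => proj1_sig (y (phi n)) i) z d Hc (eps / (INR d + 1))) as [N HN].
  apply Rdiv_lt_0_compat; lra.
  exists N. intros n Hn. unfold vdist. eapply Rle_lt_trans. apply (vnorm_bound d _ (eps / (INR d + 1))).
  apply Rlt_le, Rdiv_lt_0_compat; lra.
  intros i Hi. simpl. destruct (Compare_dec.lt_dec i d); [|lia]. left. apply HN; auto.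
  replace (INR d * (eps / (INR d + 1))) with (eps * (INR d / (INR d + 1))) by (field; lra).
  assert (INR d / (INR d + 1) < 1). { apply Rmult_lt_reg_r with (INR d + 1). lra. unfold Rdiv. rewrite Rmult_assoc, Rinv_l; lra. }
  nra.
Qed.

Variable Om : Rd d -> Prop.

Lemma unif_lemma (x : Clos Om) rho (g : R -> Clos Om -> Prop) : 0 < rho ->
  (forall z : Clos Om, cdist z x <= rho -> exists dl, 0 < dl /\ forall h y, 0 < h < dl -> cdist y z < dl -> g h y) ->
  exists h0, 0 < h0 /\ forall h y, 0 < h < h0 -> cdist y x < rho -> g h y.
Proof. intros Hr Hz. apply NNPP. intros Hno.
  assert (X : forall n : nat, {p : R * Clos Om | 0 < fst p < / (INR n + 1) /\ cdist (snd p) x < rho /\ ~ g (fst p) (snd p)}).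
  { intros n. apply constructive_indefinite_description. apply NNPP. intros Hn. apply Hno.
    exists (/ (INR n + 1)). split. apply Rinv_0_lt_compat. assert (0 <= INR n) by apply pos_INR. lra.
    intros h y Hh Hy. apply NNPP. intros Hg. apply Hn. exists (h, y). simpl. auto. }
  set (hs := fun n => fst (proj1_sig (X n))). set (ys := fun n => snd (proj1_sig (X n))).
  destruct (bwd (fun n => proj1_sig (ys n))) as [phi [z [Hs Hc]]].
  { intros i. exists (rho + Rabs (proj1_sig (proj1_sig x) i)). intros n.
    destruct (Compare_dec.lt_dec i d).
    - assert (T := coord_le d (fun j => proj1_sig (proj1_sig (ys n)) j - proj1_sig (proj1_sig x) j) i l).
      assert (cdist (ys n) x < rho) by (unfold ys; destruct (X n) as [p [? [? ?]]]; simpl; auto).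
      unfold cdist, vdist in H. simpl in T.
      assert (T2 := Rabs_triang (proj1_sig (proj1_sig (ys n)) i - proj1_sig (proj1_sig x) i) (proj1_sig (proj1_sig x) i)).
      replace (proj1_sig (proj1_sig (ys n)) i - proj1_sig (proj1_sig x) i + proj1_sig (proj1_sig x) i) with (proj1_sig (proj1_sig (ys n)) i) in T2 by ring.
      lra.
    - rewrite (proj2_sig (proj1_sig (ys n))) by lia. rewrite Rabs_R0. assert (0 <= Rabs (proj1_sig (proj1_sig x) i)) by apply Rabs_pos. lra. }
  assert (Hzc : closure Om z).
  { apply closure_closed. intros eps He. destruct (Hc eps He) as [N HN]. exists (ys (phi N)).
    rewrite vdist_sym. apply HN. lia. }
  set (zc := exist _ z Hzc : Clos Om).
  assert (Hzx : cdist zc x <= rho).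
  { apply Rnot_lt_le. intros Hlt. destruct (Hc (cdist zc x - rho)) as [N HN]. lra.
    specialize (HN N (le_n _)).
    assert (cdist (ys (phi N)) x < rho) by (unfold ys; destruct (X (phi N)) as [p [? [? ?]]]; simpl; auto).
    assert (T := cdist_tri zc (ys (phi N)) x). unfold cdist in T at 2. simpl in T. rewrite vdist_sym in T. lra. }
  destruct (Hz zc Hzx) as [dl [Hdl Hg]].
  destruct (small_inv dl Hdl) as [N1 HN1]. destruct (Hc dl Hdl) as [N2 HN2].
  set (n := max N1 N2).
  destruct (X (phi n)) as [p [Hp1 [Hp2 Hp3]]] eqn:EX.
  apply Hp3. apply Hg.
  - assert (T := sinc_ge phi Hs n). assert (T2 := inv_mono N1 (phi n) ltac:(lia)). lra.
  - specialize (HN2 n ltac:(lia)). unfold cdist. simpl. unfold ys in HN2. rewrite EX in HN2. simpl in HN2. auto.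
Qed.
End BWd.

Section Calc.
Variable d : nat.
Notation pv := (@proj1_sig _ _).

Definition fr (a : Rd d -> R) (b : nat -> R) (x : Rd d) : Prop :=
  forall eps, 0 < eps -> exists dl, 0 < dl /\ forall y, vdist y x < dl ->
    Rabs (a y - a x - sumR d (fun j => b j * (proj1_sig y j - proj1_sig x j))) <= eps * vdist y x.
Definition ct (a : Rd d -> R) (x : Rd d) : Prop :=
  forall eps, 0 < eps -> exists dl, 0 < dl /\ forall y, vdist y x < dl -> Rabs (a y - a x) < eps.

Definition L1 (b : nat -> R) := sumR d (fun j => Rabs (b j)).
Lemma L1_nonneg b : 0 <= L1 b.
Proof. apply sumR_nonneg. intros; apply Rabs_pos. Qed.

Lemma fr_lip a b x : fr a b x -> exists dl, 0 < dl /\ forall y, vdist y x < dl -> Rabs (a y - a x) <= (L1 b + 1) * vdist y x.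
Proof. intros H. destruct (H 1) as [dl [Hdl Hy]]; [lra|]. exists dl; split; auto. intros y Hyx.
  specialize (Hy y Hyx). assert (T := dot_bound d b (fun j => proj1_sig y j - proj1_sig x j)). fold (L1 b) in T.
  fold (vdist y x) in T.
  assert (T2 := Rabs_triang (a y - a x - sumR d (fun j => b j * (proj1_sig y j - proj1_sig x j))) (sumR d (fun j => b j * (proj1_sig y j - proj1_sig x j)))).
  replace (a y - a x - sumR d (fun j => b j * (proj1_sig y j - proj1_sig x j)) + sumR d (fun j => b j * (proj1_sig y j - proj1_sig x j))) with (a y - a x) in T2 by ring.
  lra. Qed.

Lemma fr_ct a b x : fr a b x -> ct a x.
Proof. intros H eps He. destruct (fr_lip a b x H) as [dl [Hdl Hy]].
  assert (0 <= L1 b) by apply L1_nonneg.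
  exists (Rmin dl (eps / (L1 b + 1))). split. apply Rmin_pos; auto. apply Rdiv_lt_0_compat; lra.
  intros y Hyx. assert (vdist y x < dl) by (eapply Rlt_le_trans; [apply Hyx| apply Rmin_l]).
  assert (vdist y x < eps / (L1 b + 1)) by (eapply Rlt_le_trans; [apply Hyx| apply Rmin_r]).
  specialize (Hy y H1). assert ((L1 b + 1) * vdist y x < eps).
  { apply Rmult_lt_reg_r with (/ (L1 b + 1)). apply Rinv_0_lt_compat; lra.
    replace ((L1 b + 1) * vdist y x * / (L1 b + 1)) with (vdist y x) by (field; lra). auto. }
  lra. Qed.

Lemma fr_ext a b b' x : (forall j, (j < d)%nat -> b j = b' j) -> fr a b x -> fr a b' x.
Proof. intros E H eps He. destruct (H eps He) as [dl [Hdl Hy]]. exists dl; split; auto. intros y Hyx.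
  rewrite (sumR_ext _ _ (fun j => b j * (proj1_sig y j - proj1_sig x j))). auto. intros; rewrite E; auto. Qed.

Lemma fr_extf a a' b x : (forall y, a y = a' y) -> fr a b x -> fr a' b x.
Proof. intros E H eps He. destruct (H eps He) as [dl [Hdl Hy]]. exists dl; split; auto. intros y Hyx.
  rewrite <- !E. auto. Qed.

Lemma ct_extf a a' x : (forall y, a y = a' y) -> ct a x -> ct a' x.
Proof. intros E H eps He. destruct (H eps He) as [dl [Hdl Hy]]. exists dl; split; auto. intros y Hyx.
  rewrite <- !E. auto. Qed.

Lemma ct_const c x : ct (fun _ => c) x.
Proof. intros eps He. exists 1. split; [lra|]. intros. rewrite Rminus_diag, Rabs_R0. auto. Qed.

Lemma ct_plus a c x : ct a x -> ct c x -> ct (fun y => a y + c y) x.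
Proof. intros Ha Hc eps He. destruct (Ha (eps/2)) as [d1 [Hd1 H1]]; [lra|]. destruct (Hc (eps/2)) as [d2 [Hd2 H2]]; [lra|].
  exists (Rmin d1 d2). split. apply Rmin_pos; auto. intros y Hy.
  assert (A1 := H1 y (Rlt_le_trans _ _ _ Hy (Rmin_l _ _))). assert (A2 := H2 y (Rlt_le_trans _ _ _ Hy (Rmin_r _ _))).
  replace (a y + c y - (a x + c x)) with ((a y - a x) + (c y - c x)) by ring.
  eapply Rle_lt_trans; [apply Rabs_triang|]. lra. Qed.

Lemma ct_mult a c x : ct a x -> ct c x -> ct (fun y => a y * c y) x.
Proof. intros Ha Hc eps He.
  set (K := Rabs (a x) + Rabs (c x) + 1).
  assert (HK : 1 <= K) by (unfold K; assert (0 <= Rabs (a x)) by apply Rabs_pos; assert (0 <= Rabs (c x)) by apply Rabs_pos; lra).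
  set (e := Rmin 1 (eps / (4 * K))).
  assert (He' : 0 < e) by (apply Rmin_pos; [lra| apply Rdiv_lt_0_compat; lra]).
  assert (He1 : e <= 1) by apply Rmin_l. assert (He2 : e <= eps / (4*K)) by apply Rmin_r.
  destruct (Ha e He') as [d1 [Hd1 H1]]. destruct (Hc e He') as [d2 [Hd2 H2]].
  exists (Rmin d1 d2). split. apply Rmin_pos; auto. intros y Hy.
  assert (A1 := H1 y (Rlt_le_trans _ _ _ Hy (Rmin_l _ _))). assert (A2 := H2 y (Rlt_le_trans _ _ _ Hy (Rmin_r _ _))).
  replace (a y * c y - a x * c x) with ((a y - a x) * c y + a x * (c y - c x)) by ring.
  eapply Rle_lt_trans; [apply Rabs_triang|]. rewrite !Rabs_mult.
  assert (Rabs (c y) <= Rabs (c x) + 1).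
  { assert (T := Rabs_triang (c y - c x) (c x)). replace (c y - c x + c x) with (c y) in T by ring. lra. }
  assert (0 <= Rabs (a x)) by apply Rabs_pos. assert (0 <= Rabs (c y)) by apply Rabs_pos.
  assert (Rabs (a y - a x) * Rabs (c y) <= e * K) by (apply Rmult_le_compat; try apply Rabs_pos; unfold K; lra).
  assert (Rabs (a x) * Rabs (c y - c x) <= K * e) by (apply Rmult_le_compat; try apply Rabs_pos; unfold K; lra).
  assert (e * K <= eps / 4). { replace (eps/4) with (eps / (4*K) * K) by (field; lra). apply Rmult_le_compat_r; lra. }
  lra. Qed.

Lemma fr_const c x : fr (fun _ => c) (fun _ => 0) x.
Proof. intros eps He. exists 1. split; [lra|]. intros y Hy.
  rewrite (sumR_ext _ _ (fun _ => 0)) by (intros; ring). rewrite sumR_zero.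
  replace (c - c - 0) with 0 by ring. rewrite Rabs_R0. assert (T := vdist_nonneg y x). nra. Qed.

Lemma fr_plus a b c e x : fr a b x -> fr c e x -> fr (fun y => a y + c y) (fun j => b j + e j) x.
Proof. intros Ha Hc eps He. destruct (Ha (eps/2)) as [d1 [Hd1 H1]]; [lra|]. destruct (Hc (eps/2)) as [d2 [Hd2 H2]]; [lra|].
  exists (Rmin d1 d2). split. apply Rmin_pos; auto. intros y Hy.
  assert (A1 := H1 y (Rlt_le_trans _ _ _ Hy (Rmin_l _ _))). assert (A2 := H2 y (Rlt_le_trans _ _ _ Hy (Rmin_r _ _))).
  rewrite (sumR_ext _ _ (fun j => b j * (proj1_sig y j - proj1_sig x j) + e j * (proj1_sig y j - proj1_sig x j))) by (intros; ring).
  rewrite sumR_plus.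
  match goal with |- Rabs ?E <= _ => replace E with ((a y - a x - sumR d (fun j => b j * (proj1_sig y j - proj1_sig x j))) + (c y - c x - sumR d (fun j => e j * (proj1_sig y j - proj1_sig x j)))) by ring end.
  eapply Rle_trans; [apply Rabs_triang|]. lra. Qed.
End Calc.
Arguments fr {d}. Arguments ct {d}.  
Arguments L1_nonneg {d}. Arguments fr_lip {d}. Arguments fr_ct {d}. Arguments fr_ext {d}. Arguments fr_extf {d}.
Arguments ct_extf {d}. Arguments ct_const {d}. Arguments ct_plus {d}. Arguments ct_mult {d}. Arguments fr_const {d}. Arguments fr_plus {d}.

Section Calc2.
Variable d : nat.

Lemma sum_lin (b e : nat -> R) (h : nat -> R) (p q : R) :
  sumR d (fun j => (p * e j + q * b j) * h j) = p * sumR d (fun j => e j * h j) + q * sumR d (fun j => b j * h j).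
Proof. rewrite (sumR_ext _ _ (fun j => p * (e j * h j) + q * (b j * h j))) by (intros; ring).
  rewrite sumR_plus, !sumR_scal. auto. Qed.

Lemma fr_mult (a c : Rd d -> R) b e x : fr a b x -> fr c e x ->
  fr (fun y => a y * c y) (fun j => a x * e j + c x * b j) x.
Proof. intros Ha Hc eps He.
  destruct (fr_lip a b x Ha) as [d0 [Hd0 Hlip]].
  assert (HL := @L1_nonneg d b).
  set (K := Rabs (a x) + Rabs (c x) + L1 d b + 2).
  assert (HK : 1 <= K) by (unfold K; assert (0 <= Rabs (a x)) by apply Rabs_pos; assert (0 <= Rabs (c x)) by apply Rabs_pos; lra).
  set (e1 := eps / (3 * K)). assert (He1 : 0 < e1) by (apply Rdiv_lt_0_compat; lra).
  destruct (Ha e1 He1) as [d1 [Hd1 H1]]. destruct (Hc e1 He1) as [d2 [Hd2 H2]].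
  destruct (fr_ct c e x Hc e1 He1) as [d3 [Hd3 H3]].
  exists (Rmin (Rmin d0 d1) (Rmin d2 d3)). split. repeat apply Rmin_pos; auto.
  intros y Hy.
  assert (Y0 : vdist y x < d0) by (eapply Rlt_le_trans; [apply Hy|]; eapply Rle_trans; [apply Rmin_l| apply Rmin_l]).
  assert (Y1 : vdist y x < d1) by (eapply Rlt_le_trans; [apply Hy|]; eapply Rle_trans; [apply Rmin_l| apply Rmin_r]).
  assert (Y2 : vdist y x < d2) by (eapply Rlt_le_trans; [apply Hy|]; eapply Rle_trans; [apply Rmin_r| apply Rmin_l]).
  assert (Y3 : vdist y x < d3) by (eapply Rlt_le_trans; [apply Hy|]; eapply Rle_trans; [apply Rmin_r| apply Rmin_r]).
  specialize (Hlip y Y0). specialize (H1 y Y1). specialize (H2 y Y2). specialize (H3 y Y3).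
  rewrite sum_lin.
  set (ra := a y - a x - sumR d (fun j => b j * (proj1_sig y j - proj1_sig x j))) in *.
  set (rc := c y - c x - sumR d (fun j => e j * (proj1_sig y j - proj1_sig x j))) in *.
  match goal with |- Rabs ?E <= _ => replace E with (a x * rc + c x * ra + (a y - a x) * (c y - c x)) by (unfold ra, rc; ring) end.
  assert (Dn := vdist_nonneg y x).
  assert (T1 : Rabs (a x * rc) <= K * (e1 * vdist y x)) by (rewrite Rabs_mult; apply Rmult_le_compat; try apply Rabs_pos; auto; unfold K; assert (0 <= Rabs (c x)) by apply Rabs_pos; lra).
  assert (T2 : Rabs (c x * ra) <= K * (e1 * vdist y x)) by (rewrite Rabs_mult; apply Rmult_le_compat; try apply Rabs_pos; auto; unfold K; assert (0 <= Rabs (a x)) by apply Rabs_pos; lra).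
  assert (T3 : Rabs ((a y - a x) * (c y - c x)) <= (K * vdist y x) * e1).
  { rewrite Rabs_mult. apply Rmult_le_compat; try apply Rabs_pos. eapply Rle_trans; [apply Hlip|]. apply Rmult_le_compat_r; auto.
    unfold K. assert (0 <= Rabs (a x)) by apply Rabs_pos; assert (0 <= Rabs (c x)) by apply Rabs_pos; lra. lra. }
  assert (E : K * (e1 * vdist y x) = eps / 3 * vdist y x) by (unfold e1; field; lra).
  assert (E' : (K * vdist y x) * e1 = eps / 3 * vdist y x) by (unfold e1; field; lra).
  eapply Rle_trans. apply Rabs_triang. eapply Rle_trans. apply Rplus_le_compat_r. apply Rabs_triang. lra.
Qed.

Definition fr1 (g : R -> R) (v t : R) : Prop :=
  forall eps, 0 < eps -> exists dl, 0 < dl /\ forall u, Rabs (u - t) < dl -> Rabs (g u - g t - v * (u - t)) <= eps * Rabs (u - t).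
Definition ct1 (g : R -> R) (t : R) : Prop :=
  forall eps, 0 < eps -> exists dl, 0 < dl /\ forall u, Rabs (u - t) < dl -> Rabs (g u - g t) < eps.

Lemma fr_comp (a : Rd d -> R) b g v x : fr a b x -> fr1 g v (a x) ->
  fr (fun y => g (a y)) (fun j => v * b j) x.
Proof. intros Ha Hg eps He.
  destruct (fr_lip a b x Ha) as [d0 [Hd0 Hlip]].
  assert (HL := @L1_nonneg d b).
  set (K := Rabs v + L1 d b + 1).
  assert (HK : 1 <= K) by (unfold K; assert (0 <= Rabs v) by apply Rabs_pos; lra).
  set (e1 := eps / (2 * K)). assert (He1 : 0 < e1) by (apply Rdiv_lt_0_compat; lra).
  destruct (Hg e1 He1) as [dg [Hdg Hg1]].
  destruct (fr_ct a b x Ha dg Hdg) as [d3 [Hd3 H3]].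
  destruct (Ha e1 He1) as [d1 [Hd1 H1]].
  exists (Rmin d0 (Rmin d1 d3)). split. repeat apply Rmin_pos; auto.
  intros y Hy.
  assert (Y0 : vdist y x < d0) by (eapply Rlt_le_trans; [apply Hy| apply Rmin_l]).
  assert (Y1 : vdist y x < d1) by (eapply Rlt_le_trans; [apply Hy|]; eapply Rle_trans; [apply Rmin_r| apply Rmin_l]).
  assert (Y3 : vdist y x < d3) by (eapply Rlt_le_trans; [apply Hy|]; eapply Rle_trans; [apply Rmin_r| apply Rmin_r]).
  specialize (Hlip y Y0). specialize (H1 y Y1). specialize (H3 y Y3). specialize (Hg1 (a y) H3).
  rewrite (sumR_ext _ _ (fun j => v * (b j * (proj1_sig y j - proj1_sig x j)))) by (intros; ring).
  rewrite sumR_scal.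
  set (ra := a y - a x - sumR d (fun j => b j * (proj1_sig y j - proj1_sig x j))) in *.
  match goal with |- Rabs ?E <= _ => replace E with ((g (a y) - g (a x) - v * (a y - a x)) + v * ra) by (unfold ra; ring) end.
  assert (Dn := vdist_nonneg y x).
  assert (T1 : Rabs (g (a y) - g (a x) - v * (a y - a x)) <= e1 * (K * vdist y x)).
  { eapply Rle_trans; [apply Hg1|]. apply Rmult_le_compat_l; [lra|]. eapply Rle_trans; [apply Hlip|].
    apply Rmult_le_compat_r; auto. unfold K. assert (0 <= Rabs v) by apply Rabs_pos. lra. }
  assert (T2 : Rabs (v * ra) <= K * (e1 * vdist y x)).
  { rewrite Rabs_mult. apply Rmult_le_compat; try apply Rabs_pos; auto. unfold K. lra. }
  assert (E : K * (e1 * vdist y x) = eps / 2 * vdist y x) by (unfold e1; field; lra).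
  assert (E' : e1 * (K * vdist y x) = eps / 2 * vdist y x) by (unfold e1; field; lra).
  eapply Rle_trans. apply Rabs_triang. lra.
Qed.

Lemma fr1_ct1 g v t : fr1 g v t -> ct1 g t.
Proof. intros H eps He. destruct (H 1) as [dl [Hdl Hu]]; [lra|].
  set (K := Rabs v + 1). assert (1 <= K) by (unfold K; assert (0 <= Rabs v) by apply Rabs_pos; lra).
  exists (Rmin dl (eps / (4*K))). split. apply Rmin_pos; auto. apply Rdiv_lt_0_compat; lra.
  intros u Hut. assert (A1 : Rabs (u - t) < dl) by (eapply Rlt_le_trans; [apply Hut| apply Rmin_l]).
  assert (A2 : Rabs (u - t) < eps / (4*K)) by (eapply Rlt_le_trans; [apply Hut| apply Rmin_r]).
  specialize (Hu u A1).
  assert (T := Rabs_triang (g u - g t - v * (u - t)) (v * (u - t))).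
  replace (g u - g t - v * (u - t) + v * (u - t)) with (g u - g t) in T by ring.
  rewrite Rabs_mult in T. assert (0 <= Rabs (u - t)) by apply Rabs_pos.
  assert (Rabs v * Rabs (u - t) <= K * Rabs (u - t)) by (apply Rmult_le_compat_r; unfold K; lra).
  assert (K * Rabs (u - t) <= eps / 4).
  { replace (eps / 4) with (K * (eps / (4 * K))) by (field; lra). apply Rmult_le_compat_l; lra. }
  assert (Rabs (u - t) <= K * Rabs (u - t)) by nra. lra. Qed.

Lemma ct_comp (a : Rd d -> R) g x : ct a x -> ct1 g (a x) -> ct (fun y => g (a y)) x.
Proof. intros Ha Hg eps He. destruct (Hg eps He) as [dg [Hdg Hg1]]. destruct (Ha dg Hdg) as [dl [Hdl H]].
  exists dl. split; [auto|]. intros y Hy. apply Hg1. apply H. auto. Qed.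
End Calc2.
Arguments fr_mult {d}. Arguments fr_comp {d}. Arguments ct_comp {d}.

Lemma fin_delta k (P : nat -> R -> Prop) : (forall i dl dl', 0 < dl' <= dl -> P i dl -> P i dl') ->
  (forall i, (i < k)%nat -> exists dl, 0 < dl /\ P i dl) -> exists dl, 0 < dl /\ forall i, (i < k)%nat -> P i dl.
Proof. intros Hm. induction k; intros H. exists 1. split; [lra| intros; lia].
  destruct IHk as [d1 [Hd1 H1]]. intros; apply H; lia. destruct (H k ltac:(lia)) as [d2 [Hd2 H2]].
  exists (Rmin d1 d2). split. apply Rmin_pos; auto. intros i Hi. destruct (Nat.eq_dec i k).
  subst. apply (Hm k d2). split. apply Rmin_pos; auto. apply Rmin_r. auto.
  apply (Hm i d1). split. apply Rmin_pos; auto. apply Rmin_l. apply H1; lia. Qed.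

Section C2.
Variable d : nat.

Definition C2at (f : Rd d -> R) (Df : Rd d -> Rd d) (D2f : Rd d -> Sym d) (x : Rd d) : Prop :=
  has_grad f Df x /\ has_hess Df D2f x /\ cont_sym D2f x.

Lemma fr_of_hess (Df : Rd d -> Rd d) (D2f : Rd d -> Sym d) (x : Rd d) : has_hess Df D2f x -> forall i, (i < d)%nat ->
  fr (fun y => proj1_sig (Df y) i) (proj1_sig (D2f x) i) x.
Proof. intros H i Hi eps He. destruct (H eps He) as [dl [Hdl Hy]]. exists dl. split; [auto|]. intros y Hyx.
  eapply Rle_trans; [| apply (Hy y Hyx)].
  apply (coord_le d (fun i => proj1_sig (Df y) i - proj1_sig (Df x) i -
     sumR d (fun j => proj1_sig (D2f x) i j * (proj1_sig y j - proj1_sig x j))) i Hi). Qed.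

Lemma hess_of_fr (Df : Rd d -> Rd d) (D2f : Rd d -> Sym d) (x : Rd d) : (forall i, (i < d)%nat -> fr (fun y => proj1_sig (Df y) i) (proj1_sig (D2f x) i) x) ->
  has_hess Df D2f x.
Proof. intros H eps He. assert (0 <= INR d) by apply pos_INR.
  set (e := eps / (INR d + 1)). assert (0 < e) by (apply Rdiv_lt_0_compat; lra).
  destruct (fin_delta d (fun i dl => forall y, vdist y x < dl -> Rabs (proj1_sig (Df y) i - proj1_sig (Df x) i -
     sumR d (fun j => proj1_sig (D2f x) i j * (proj1_sig y j - proj1_sig x j))) <= e * vdist y x)) as [dl [Hdl Hy]].
  { intros i a b Hab Ha y Hy. apply Ha. lra. }
  { intros i Hi. apply (H i Hi e); auto. }
  exists dl. split; auto. intros y Hyx. assert (Dn := vdist_nonneg y x).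
  eapply Rle_trans. apply vnorm_bound with (c := e * vdist y x). apply Rmult_le_pos; lra.
  intros i Hi. apply Hy; auto.
  rewrite <- Rmult_assoc. apply Rmult_le_compat_r; auto. unfold e.
  replace (INR d * (eps / (INR d + 1))) with (eps * (INR d / (INR d + 1))) by (field; lra).
  assert (INR d / (INR d + 1) <= 1). { apply Rmult_le_reg_r with (INR d + 1). lra. unfold Rdiv. rewrite Rmult_assoc, Rinv_l; lra. }
  nra. Qed.

Lemma ct_of_cont (D2f : Rd d -> Sym d) (x : Rd d) : cont_sym D2f x -> forall i j, (i < d)%nat -> (j < d)%nat -> ct (fun y => proj1_sig (D2f y) i j) x.
Proof. intros H i j Hi Hj eps He. destruct (H eps He) as [dl [Hdl Hy]]. exists dl. split; [auto|]. intros y Hyx.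
  eapply Rle_lt_trans; [| apply (Hy y Hyx)].
  apply (mcoord_le d (fun i j => proj1_sig (D2f y) i j - proj1_sig (D2f x) i j) i j Hi Hj). Qed.

Lemma cont_of_ct (D2f : Rd d -> Sym d) (x : Rd d) : (forall i j, (i < d)%nat -> (j < d)%nat -> ct (fun y => proj1_sig (D2f y) i j) x) -> cont_sym D2f x.
Proof. intros H eps He. assert (0 <= INR d) by apply pos_INR.
  set (e := eps / (INR d + 1)). assert (0 < e) by (apply Rdiv_lt_0_compat; lra).
  destruct (fin_delta d (fun i dl => forall j, (j < d)%nat -> forall y, vdist y x < dl -> Rabs (proj1_sig (D2f y) i j - proj1_sig (D2f x) i j) < e)) as [dl [Hdl Hy]].
  { intros i a b Hab Ha j Hj y Hy. apply Ha; auto. lra. }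
  { intros i Hi. apply (fin_delta d (fun j dl => forall y, vdist y x < dl -> Rabs (proj1_sig (D2f y) i j - proj1_sig (D2f x) i j) < e)).
    intros j a b Hab Ha y Hy. apply Ha. lra. intros j Hj. apply (H i j Hi Hj e); auto. }
  exists dl. split; auto. intros y Hyx.
  eapply Rle_lt_trans. apply mnorm_bound with (c := e). lra.
  intros i j Hi Hj. left. apply Hy; auto.
  unfold e. replace (INR d * (eps / (INR d + 1))) with (eps * (INR d / (INR d + 1))) by (field; lra).
  assert (INR d / (INR d + 1) < 1). { apply Rmult_lt_reg_r with (INR d + 1). lra. unfold Rdiv. rewrite Rmult_assoc, Rinv_l; lra. }
  nra. Qed.

Definition mkSym (M : nat -> nat -> R) : Sym d.
Proof. exists (fun i j => if Compare_dec.lt_dec i d then if Compare_dec.lt_dec j d then (M i j + M j i)/2 else 0 else 0).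
  split. intros i j. destruct (Compare_dec.lt_dec i d), (Compare_dec.lt_dec j d); auto; lra.
  intros i j Hi. destruct (Compare_dec.lt_dec i d); auto. lia. Defined.

Lemma mkSym_at M i j : (i < d)%nat -> (j < d)%nat -> proj1_sig (mkSym M) i j = (M i j + M j i)/2.
Proof. intros Hi Hj. simpl. destruct (Compare_dec.lt_dec i d); [|lia]. destruct (Compare_dec.lt_dec j d); [|lia]. auto. Qed.

Lemma trunc_at z i : (i < d)%nat -> proj1_sig (trunc d z) i = z i.
Proof. intros Hi. simpl. destruct (Compare_dec.lt_dec i d); [|lia]. auto. Qed.

Lemma symE (M : Sym d) i j : proj1_sig M i j = proj1_sig M j i.
Proof. apply (proj1 (proj2_sig M)). Qed.

Lemma C2_mult (f : Rd d -> R) (Df : Rd d -> Rd d) (D2f : Rd d -> Sym d) (g : Rd d -> R) (Dg : Rd d -> Rd d) (D2g : Rd d -> Sym d) (x : Rd d) : C2at f Df D2f x -> C2at g Dg D2g x ->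
  C2at (fun y => f y * g y)
    (fun y => trunc d (fun j => f y * proj1_sig (Dg y) j + g y * proj1_sig (Df y) j))
    (fun y => mkSym (fun i j => f y * proj1_sig (D2g y) i j + g y * proj1_sig (D2f y) i j
                    + proj1_sig (Df y) i * proj1_sig (Dg y) j + proj1_sig (Dg y) i * proj1_sig (Df y) j)) x.
Proof. intros [Gf [Hf Cf]] [Gg [Hg Cg]]. split; [|split].
  - assert (H := fr_mult f g _ _ x Gf Gg). eapply fr_ext; [| apply H]. intros j Hj. cbv beta. rewrite trunc_at by auto. reflexivity.
  - apply hess_of_fr. intros i Hi.
    apply (fr_extf (fun y => f y * proj1_sig (Dg y) i + g y * proj1_sig (Df y) i)).
    intros y. rewrite trunc_at; auto.
    assert (H := fr_plus _ _ _ _ x (fr_mult f _ _ _ x Gf (fr_of_hess Dg D2g x Hg i Hi)) (fr_mult g _ _ _ x Gg (fr_of_hess Df D2f x Hf i Hi))).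
    simpl in H. eapply fr_ext; [| apply H]. intros j Hj. rewrite mkSym_at by auto.
    rewrite (symE (D2g x) j i), (symE (D2f x) j i). field.
  - apply cont_of_ct. intros i j Hi Hj.
    apply (ct_extf (fun y => f y * proj1_sig (D2g y) i j + g y * proj1_sig (D2f y) i j
                    + proj1_sig (Df y) i * proj1_sig (Dg y) j + proj1_sig (Dg y) i * proj1_sig (Df y) j)).
    intros y. rewrite mkSym_at by auto. rewrite (symE (D2g y) j i), (symE (D2f y) j i). field.
    assert (cf := fr_ct _ _ _ Gf). assert (cg := fr_ct _ _ _ Gg).
    assert (cdfi := fr_ct _ _ _ (fr_of_hess Df D2f x Hf i Hi)). assert (cdfj := fr_ct _ _ _ (fr_of_hess Df D2f x Hf j Hj)).
    assert (cdgi := fr_ct _ _ _ (fr_of_hess Dg D2g x Hg i Hi)). assert (cdgj := fr_ct _ _ _ (fr_of_hess Dg D2g x Hg j Hj)).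
    assert (c2f := ct_of_cont D2f x Cf i j Hi Hj). assert (c2g := ct_of_cont D2g x Cg i j Hi Hj).
    repeat apply ct_plus; apply ct_mult; auto.
Qed.
End C2.
Arguments C2at {d}. Arguments fr_of_hess {d}. Arguments hess_of_fr {d}. Arguments ct_of_cont {d}. Arguments cont_of_ct {d}.
Arguments mkSym_at {d}. Arguments trunc_at {d}. Arguments symE {d}. Arguments C2_mult {d}.

Section C2b.
Variable d : nat.

Lemma C2_comp (f : Rd d -> R) (Df : Rd d -> Rd d) (D2f : Rd d -> Sym d) (x : Rd d) g g1 g2 :
  C2at f Df D2f x -> fr1 g (g1 (f x)) (f x) -> fr1 g1 (g2 (f x)) (f x) -> ct1 g2 (f x) ->
  C2at (fun y => g (f y)) (fun y => trunc d (fun j => g1 (f y) * proj1_sig (Df y) j))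
    (fun y => mkSym d (fun i j => g2 (f y) * proj1_sig (Df y) i * proj1_sig (Df y) j + g1 (f y) * proj1_sig (D2f y) i j)) x.
Proof. intros [Gf [Hf Cf]] F1 F2 C3. split; [|split].
  - assert (H := fr_comp f _ g _ x Gf F1). eapply fr_ext; [| apply H]. intros j Hj. cbv beta. rewrite trunc_at by auto. reflexivity.
  - apply hess_of_fr. intros i Hi.
    apply (fr_extf (fun y => g1 (f y) * proj1_sig (Df y) i)). intros y. rewrite trunc_at; auto.
    assert (H := fr_mult (fun y => g1 (f y)) (fun y => proj1_sig (Df y) i) _ _ x (fr_comp f _ g1 _ x Gf F2) (fr_of_hess Df D2f x Hf i Hi)).
    eapply fr_ext; [| apply H]. intros j Hj. cbv beta. rewrite mkSym_at by auto.
    rewrite (symE (D2f x) j i). field.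
  - apply cont_of_ct. intros i j Hi Hj.
    apply (ct_extf (fun y => g2 (f y) * proj1_sig (Df y) i * proj1_sig (Df y) j + g1 (f y) * proj1_sig (D2f y) i j)).
    intros y. rewrite mkSym_at by auto. rewrite (symE (D2f y) j i). field.
    assert (cf := fr_ct _ _ _ Gf).
    assert (cdfi := fr_ct _ _ _ (fr_of_hess Df D2f x Hf i Hi)). assert (cdfj := fr_ct _ _ _ (fr_of_hess Df D2f x Hf j Hj)).
    assert (c2f := ct_of_cont D2f x Cf i j Hi Hj).
    assert (cg2 := ct_comp f g2 x cf C3). assert (cg1 := ct_comp f g1 x cf (fr1_ct1 _ _ _ F2)).
    apply ct_plus; repeat apply ct_mult; auto.
Qed.

Lemma C2_addc (f : Rd d -> R) (Df : Rd d -> Rd d) (D2f : Rd d -> Sym d) (x : Rd d) c :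
  C2at f Df D2f x -> C2at (fun y => f y + c) Df D2f x.
Proof. intros [Gf [Hf Cf]]. split; [|split]; auto.
  intros eps He. destruct (Gf eps He) as [dl [Hdl Hy]]. exists dl. split; [auto|]. intros y Hyx.
  replace (f y + c - (f x + c)) with (f y - f x) by ring. auto. Qed.

Lemma sumR_minus n (a b : nat -> R) : sumR n a - sumR n b = sumR n (fun i => a i - b i).
Proof. induction n; simpl; [lra|]. rewrite <- IHn. ring. Qed.

Lemma sumR_delta n i c (v : nat -> R) : (i < n)%nat -> sumR n (fun j => (if Nat.eq_dec i j then c else 0) * v j) = c * v i.
Proof. induction n; intros Hi. lia. simpl. destruct (Nat.eq_dec i n).
  - subst. rewrite (sumR_ext _ _ (fun _ => 0)). rewrite sumR_zero. ring.
    intros j Hj. destruct (Nat.eq_dec n j); [lia|]. ring.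
  - rewrite IHn by lia. ring. Qed.

Definition sfun (x0 : Rd d) (y : Rd d) := sumR d (fun i => (proj1_sig y i - proj1_sig x0 i)^2).
Definition Dsfun (x0 : Rd d) (y : Rd d) : Rd d := trunc d (fun i => 2 * (proj1_sig y i - proj1_sig x0 i)).
Definition D2sfun (y : Rd d) : Sym d := mkSym d (fun i j => if Nat.eq_dec i j then 2 else 0).

Lemma sfun_dist x0 y : sfun x0 y = vdist y x0 ^ 2.
Proof. unfold vdist. rewrite vnorm_sq. auto. Qed.

Lemma C2_s x0 x : C2at (sfun x0) (Dsfun x0) D2sfun x.
Proof. split; [|split].
  - intros eps He. exists eps. split; [auto|]. intros y Hy.
    rewrite (sumR_ext d (fun j => proj1_sig (Dsfun x0 x) j * (proj1_sig y j - proj1_sig x j)) (fun j => 2 * (proj1_sig x j - proj1_sig x0 j) * (proj1_sig y j - proj1_sig x j)))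
      by (intros j Hj; unfold Dsfun; rewrite trunc_at; auto). unfold sfun.
    rewrite !sumR_minus.
    rewrite (sumR_ext d _ (fun j => (proj1_sig y j - proj1_sig x j)^2)) by (intros; ring).
    fold (vnorm d (fun j => proj1_sig y j - proj1_sig x j)). fold (vdist y x).
    rewrite <- vnorm_sq. fold (vdist y x). assert (Dn := vdist_nonneg y x).
    rewrite Rabs_pos_eq by nra. nra.
  - apply hess_of_fr. intros i Hi.
    apply (fr_extf (fun y => 2 * (proj1_sig y i - proj1_sig x0 i))). intros y. unfold Dsfun. rewrite trunc_at; auto.
    eapply (fr_ext _ (fun j => if Nat.eq_dec i j then 2 else 0)). intros j Hj. unfold D2sfun. rewrite mkSym_at by auto.
    destruct (Nat.eq_dec i j), (Nat.eq_dec j i); try lia; lra.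
    intros eps He. exists 1. split; [lra|]. intros y Hy. rewrite sumR_delta by auto.
    replace (2 * (proj1_sig y i - proj1_sig x0 i) - 2 * (proj1_sig x i - proj1_sig x0 i) - 2 * (proj1_sig y i - proj1_sig x i)) with 0 by ring.
    rewrite Rabs_R0. assert (Dn := vdist_nonneg y x). nra.
  - apply cont_of_ct. intros i j Hi Hj. apply (ct_extf (fun _ => proj1_sig (D2sfun x) i j)); [reflexivity| apply ct_const].
Qed.

Definition qf (k t : R) := 1 - k * t^2.
Definition q1f (k t : R) := -2 * k * t.
Definition q2f (k t : R) := -2 * k.
Definition pf (u : R) := (Rmax 0 u)^3.
Definition p1f (u : R) := 3 * (Rmax 0 u)^2.
Definition p2f (u : R) := 6 * Rmax 0 u.

Lemma fr1_q k t : 0 <= k -> fr1 (qf k) (q1f k t) t.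
Proof. intros Hk eps He. exists (eps / (k + 1)). split. apply Rdiv_lt_0_compat; lra. intros u Hu.
  unfold qf, q1f. replace (1 - k * u ^ 2 - (1 - k * t ^ 2) - -2 * k * t * (u - t)) with (- (k * (u - t)^2)) by ring.
  rewrite Rabs_Ropp. assert (0 <= Rabs (u - t)) by apply Rabs_pos.
  rewrite <- pow2_abs. rewrite Rabs_pos_eq by nra.
  assert (k * Rabs (u - t) <= eps). { apply Rmult_lt_compat_l with (r := k + 1) in Hu; [|lra].
    replace ((k + 1) * (eps / (k + 1))) with eps in Hu by (field; lra). nra. }
  nra. Qed.

Lemma fr1_q1 k t : fr1 (q1f k) (q2f k t) t.
Proof. intros eps He. exists 1. split; [lra|]. intros u Hu. unfold q1f, q2f.
  replace (-2 * k * u - -2 * k * t - -2 * k * (u - t)) with 0 by ring. rewrite Rabs_R0.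
  assert (0 <= Rabs (u - t)) by apply Rabs_pos. nra. Qed.

Lemma ct1_q2 k t : ct1 (q2f k) t.
Proof. intros eps He. exists 1. split; [lra|]. intros. unfold q2f. rewrite Rminus_diag, Rabs_R0. auto. Qed.

Lemma p_bound t u : Rabs (pf u - pf t - p1f t * (u - t)) <= 3 * (Rabs t + Rabs u) * (u - t)^2.
Proof. unfold pf, p1f, Rmax. assert (Q : 0 <= (u - t)^2) by apply pow2_ge_0.
  destruct (Rle_dec 0 u) as [Hu|Hu], (Rle_dec 0 t) as [Ht|Ht].
  - rewrite (Rabs_pos_eq t), (Rabs_pos_eq u) by lra.
    replace (u ^ 3 - t ^ 3 - 3 * t ^ 2 * (u - t)) with ((u - t)^2 * (u + 2 * t)) by ring.
    assert (0 <= (u-t)^2 * (2*u + t)) by (apply Rmult_le_pos; lra).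
    assert (0 <= (u-t)^2 * (u + 2*t)) by (apply Rmult_le_pos; lra).
    rewrite Rabs_pos_eq by lra. nra.
  - rewrite (Rabs_left t), (Rabs_pos_eq u) by lra.
    replace (u ^ 3 - 0 ^ 3 - 3 * 0 ^ 2 * (u - t)) with (u * u^2) by ring.
    rewrite Rabs_pos_eq by nra. assert (u^2 <= (u-t)^2) by nra. assert (u <= 3 * (-t + u)) by lra.
    apply Rmult_le_compat; nra.
  - rewrite (Rabs_pos_eq t), (Rabs_left u) by lra.
    replace (0 ^ 3 - t ^ 3 - 3 * t ^ 2 * (u - t)) with (t^2 * (2 * t - 3 * u)) by ring.
    rewrite Rabs_pos_eq by nra. assert (t^2 <= (u-t)^2) by nra. assert (2 * t - 3 * u <= 3 * (t + - u)) by lra.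
    rewrite Rmult_comm. apply Rmult_le_compat; nra.
  - replace (0 ^ 3 - 0 ^ 3 - 3 * 0 ^ 2 * (u - t)) with 0 by ring. rewrite Rabs_R0.
    assert (0 <= Rabs t) by apply Rabs_pos. assert (0 <= Rabs u) by apply Rabs_pos. nra.
Qed.

Lemma p1_bound t u : Rabs (p1f u - p1f t - p2f t * (u - t)) <= 6 * (u - t)^2.
Proof. unfold p1f, p2f, Rmax. assert (Q : 0 <= (u - t)^2) by apply pow2_ge_0.
  destruct (Rle_dec 0 u) as [Hu|Hu], (Rle_dec 0 t) as [Ht|Ht].
  - replace (3 * u ^ 2 - 3 * t ^ 2 - 6 * t * (u - t)) with (3 * (u - t)^2) by ring. rewrite Rabs_pos_eq; lra.
  - replace (3 * u ^ 2 - 3 * 0 ^ 2 - 6 * 0 * (u - t)) with (3 * u^2) by ring.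
    assert (u^2 <= (u-t)^2) by nra. assert (0 <= u^2) by apply pow2_ge_0. rewrite Rabs_pos_eq; lra.
  - replace (3 * 0 ^ 2 - 3 * t ^ 2 - 6 * t * (u - t)) with (3 * t * (t - 2 * u)) by ring.
    assert (0 <= 3 * t * (t - 2 * u)) by (apply Rmult_le_pos; lra).
    assert (0 <= u^2) by apply pow2_ge_0.
    assert (6 * (u - t)^2 - 3 * t * (t - 2 * u) = 3 * (u - t)^2 + 3 * u^2) by ring.
    rewrite Rabs_pos_eq; lra.
  - replace (3 * 0 ^ 2 - 3 * 0 ^ 2 - 6 * 0 * (u - t)) with 0 by ring. rewrite Rabs_R0. lra.
Qed.

Lemma fr1_p t : fr1 pf (p1f t) t.
Proof. intros eps He. set (K := 3 * (2 * Rabs t + 1)). assert (0 <= Rabs t) by apply Rabs_pos.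
  exists (Rmin 1 (eps / K)). split. apply Rmin_pos; [lra|]. apply Rdiv_lt_0_compat; unfold K; lra.
  intros u Hu. assert (A1 : Rabs (u - t) < 1) by (eapply Rlt_le_trans; [apply Hu| apply Rmin_l]).
  assert (A2 : Rabs (u - t) < eps / K) by (eapply Rlt_le_trans; [apply Hu| apply Rmin_r]).
  eapply Rle_trans; [apply p_bound|]. assert (0 <= Rabs (u - t)) by apply Rabs_pos.
  assert (Rabs u <= Rabs t + 1). { assert (T := Rabs_triang (u - t) t). replace (u - t + t) with u in T by ring. lra. }
  rewrite <- pow2_abs.
  assert (K * Rabs (u - t) <= eps). { apply Rmult_lt_compat_l with (r := K) in A2; [|unfold K; lra].
    replace (K * (eps / K)) with eps in A2 by (field; unfold K; lra). lra. }
  assert (3 * (Rabs t + Rabs u) <= K) by (unfold K; lra).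
  assert (3 * (Rabs t + Rabs u) * Rabs (u - t) ^ 2 <= K * Rabs (u - t) * Rabs (u - t)).
  { replace (Rabs (u - t) ^ 2) with (Rabs (u - t) * Rabs (u - t)) by ring. rewrite <- Rmult_assoc.
    apply Rmult_le_compat_r; auto. apply Rmult_le_compat_r; auto. }
  nra. Qed.

Lemma fr1_p1 t : fr1 p1f (p2f t) t.
Proof. intros eps He. exists (eps / 6). split; [lra|]. intros u Hu.
  eapply Rle_trans; [apply p1_bound|]. assert (0 <= Rabs (u - t)) by apply Rabs_pos.
  rewrite <- pow2_abs. nra. Qed.

Lemma ct1_p2 t : ct1 p2f t.
Proof. intros eps He. exists (eps / 6). split; [lra|]. intros u Hu. unfold p2f.
  apply abs_lt_inv in Hu. apply abs_lt_intro. unfold Rmax. destruct (Rle_dec 0 u), (Rle_dec 0 t); lra. Qed.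
End C2b.
Arguments C2_comp {d}. Arguments C2_addc {d}. Arguments C2_s {d}. Arguments sfun {d}. Arguments Dsfun {d}. Arguments D2sfun {d}.

Section TF.
Variable d : nat.

Lemma Rd_eq (a b : Rd d) : (forall i, (i < d)%nat -> proj1_sig a i = proj1_sig b i) -> a = b.
Proof. destruct a as [a Ha], b as [b Hb]. simpl. intros H. apply subset_eq_compat.
  apply functional_extensionality. intros i. destruct (Compare_dec.lt_dec i d). auto. rewrite Ha, Hb by lia. auto. Qed.

Lemma Sym_eq (a b : Sym d) : (forall i j, (i < d)%nat -> (j < d)%nat -> proj1_sig a i j = proj1_sig b i j) -> a = b.
Proof. destruct a as [a [Sa Ha]], b as [b [Sb Hb]]. simpl. intros H. apply subset_eq_compat.
  apply functional_extensionality. intros i. apply functional_extensionality. intros j.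
  destruct (Compare_dec.lt_dec i d). destruct (Compare_dec.lt_dec j d). auto.
  rewrite Sa, Sb, Ha, Hb by lia. auto. rewrite Ha, Hb by lia. auto. Qed.

Definition theta (x0 : Rd d) (k : R) (y : Rd d) := pf (qf k (sfun x0 y)).

Lemma sfun_x0 (x0 : Rd d) : sfun x0 x0 = 0.
Proof. unfold sfun. rewrite (sumR_ext _ _ (fun _ => 0)) by (intros; ring). apply sumR_zero. Qed.

Lemma theta_x0 (x0 : Rd d) k : theta x0 k x0 = 1.
Proof. unfold theta, pf, qf. rewrite sfun_x0. replace (1 - k * 0^2) with 1 by ring. rewrite Rmax_right by lra. ring. Qed.

Lemma theta_range (x0 : Rd d) k y : 0 <= k -> 0 <= theta x0 k y <= 1.
Proof. intros Hk. unfold theta, pf, qf. assert (0 <= sfun x0 y ^ 2) by apply pow2_ge_0.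
  assert (0 <= k * sfun x0 y ^2) by nra.
  unfold Rmax. destruct (Rle_dec 0 _) as [h|h].
  - split. apply pow_le; auto. replace 1 with (1^3) by ring. apply pow_incr. lra.
  - replace (0^3) with 0 by ring. lra. Qed.

Lemma theta_far (x0 y : Rd d) rho : 0 < rho -> rho <= vdist y x0 -> theta x0 (/ rho ^ 4) y = 0.
Proof. intros Hr Hy. unfold theta, pf, qf. rewrite sfun_dist.
  assert (rho ^ 4 <= (vdist y x0 ^ 2) ^ 2). { replace ((vdist y x0 ^ 2)^2) with (vdist y x0 ^ 4) by ring. apply pow_incr. lra. }
  assert (0 < rho ^ 4) by (apply pow_lt; auto).
  assert (1 <= / rho ^ 4 * (vdist y x0 ^ 2) ^ 2).
  { apply Rmult_le_reg_l with (rho ^ 4); auto. rewrite <- Rmult_assoc, Rinv_r by lra. lra. }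
  rewrite Rmax_left by lra. ring. Qed.

Lemma theta_gap (x0 y : Rd d) k tau : 0 <= k -> 0 < tau -> tau <= vdist y x0 -> Rmin 1 (k * tau ^ 4) <= 1 - theta x0 k y.
Proof. intros Hk Ht Hy. unfold theta, pf, qf. rewrite sfun_dist.
  assert (tau ^ 4 <= (vdist y x0 ^ 2) ^ 2). { replace ((vdist y x0 ^ 2)^2) with (vdist y x0 ^ 4) by ring. apply pow_incr. lra. }
  assert (k * tau ^ 4 <= k * (vdist y x0 ^ 2) ^ 2) by (apply Rmult_le_compat_l; auto).
  set (q := 1 - k * (vdist y x0 ^ 2) ^ 2) in *.
  unfold Rmax. destruct (Rle_dec 0 q).
  - assert (q <= 1) by (unfold q; assert (0 <= (vdist y x0 ^ 2)^2) by apply pow2_ge_0; nra).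
    assert (q ^ 3 <= q) by nra. assert (Rmin 1 (k * tau ^ 4) <= k * tau ^ 4) by apply Rmin_r. unfold q in *. lra.
  - assert (Rmin 1 (k * tau ^ 4) <= 1) by apply Rmin_l. replace (0^3) with 0 by ring. lra. Qed.

Variable Om : Rd d -> Prop.

Lemma test_fn (phi : Rd d -> R) (Dphi : Rd d -> Rd d) (D2phi : Rd d -> Sym d) (x0 : Rd d) (k K : R) :
  C2_closure Om phi Dphi D2phi -> 0 <= k ->
  exists Dpsi D2psi, C2_closure Om (fun y => theta x0 k y * (phi y + - K) + K) Dpsi D2psi /\
    Dpsi x0 = Dphi x0 /\ D2psi x0 = D2phi x0.
Proof. intros [U [HU [HcU HC]]] Hk.
  set (s := sfun x0). set (Ds := Dsfun x0). set (D2s := @D2sfun d).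
  set (Dq := fun y => trunc d (fun j => q1f k (s y) * proj1_sig (Ds y) j)).
  set (D2q := fun y => mkSym d (fun i j => q2f k (s y) * proj1_sig (Ds y) i * proj1_sig (Ds y) j + q1f k (s y) * proj1_sig (D2s y) i j)).
  set (qs := fun y => qf k (s y)).
  set (Dt := fun y => trunc d (fun j => p1f (qs y) * proj1_sig (Dq y) j)).
  set (D2t := fun y => mkSym d (fun i j => p2f (qs y) * proj1_sig (Dq y) i * proj1_sig (Dq y) j + p1f (qs y) * proj1_sig (D2q y) i j)).
  set (th := fun y => pf (qs y)).
  set (Dpr := fun y => trunc d (fun j => th y * proj1_sig (Dphi y) j + (phi y + - K) * proj1_sig (Dt y) j)).
  set (D2pr := fun y => mkSym d (fun i j => th y * proj1_sig (D2phi y) i j + (phi y + - K) * proj1_sig (D2t y) i j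
                    + proj1_sig (Dt y) i * proj1_sig (Dphi y) j + proj1_sig (Dphi y) i * proj1_sig (Dt y) j)).
  exists Dpr, D2pr. split; [|split].
  - exists U. split; [auto|split; [auto|]]. intros x Hx.
    assert (C1 : C2at qs Dq D2q x) by (apply (C2_comp s Ds D2s x (qf k) (q1f k) (q2f k)); [apply C2_s| apply fr1_q; auto| apply fr1_q1| apply ct1_q2]).
    assert (C2' : C2at th Dt D2t x) by (apply (C2_comp qs Dq D2q x pf p1f p2f); [auto| apply fr1_p| apply fr1_p1| apply ct1_p2]).
    assert (C3 : C2at (fun y => phi y + - K) Dphi D2phi x) by (apply C2_addc; apply HC; auto).
    assert (C4 := C2_mult _ _ _ _ _ _ x C2' C3).
    apply (C2_addc _ _ _ x K C4).
  - apply Rd_eq. intros i Hi. unfold Dpr. rewrite trunc_at by auto.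
    unfold Dt. rewrite trunc_at by auto. unfold Dq. rewrite trunc_at by auto.
    assert (T1 : th x0 = 1) by apply theta_x0.
    assert (T2 : q1f k (s x0) = 0) by (unfold q1f, s; rewrite sfun_x0; ring).
    rewrite T1, T2. ring.
  - apply Sym_eq. intros i j Hi Hj. unfold D2pr. rewrite mkSym_at by auto.
    assert (Z1 : forall m, (m < d)%nat -> proj1_sig (Ds x0) m = 0).
    { intros m Hm. unfold Ds, Dsfun. rewrite trunc_at by auto. ring. }
    assert (Z2 : forall m, (m < d)%nat -> proj1_sig (Dq x0) m = 0).
    { intros m Hm. unfold Dq. rewrite trunc_at by auto. unfold s. rewrite sfun_x0. unfold q1f. ring. }
    assert (Z3 : forall m, (m < d)%nat -> proj1_sig (Dt x0) m = 0).
    { intros m Hm. unfold Dt. rewrite trunc_at by auto. rewrite Z2 by auto. ring. }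
    assert (Z4 : forall m n, (m < d)%nat -> (n < d)%nat -> proj1_sig (D2q x0) m n = 0).
    { intros m n Hm Hn. unfold D2q. rewrite mkSym_at by auto. rewrite !Z1 by auto. unfold s. rewrite sfun_x0. unfold q1f. field. }
    assert (Z5 : forall m n, (m < d)%nat -> (n < d)%nat -> proj1_sig (D2t x0) m n = 0).
    { intros m n Hm Hn. unfold D2t. rewrite mkSym_at by auto. rewrite !Z2, !Z4 by auto. field. }
    assert (T1 : th x0 = 1). { apply theta_x0. }
    rewrite T1, !Z3, !Z5 by auto. rewrite (symE (D2phi x0) j i). field.
Qed.
End TF.
Arguments Rd_eq {d}. Arguments Sym_eq {d}. Arguments theta {d}. Arguments theta_x0 {d}. Arguments theta_range {d}.
Arguments theta_far {d}. Arguments theta_gap {d}. Arguments test_fn {d}.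

Lemma exp_small h : 0 < h -> exp (- / h) < h.
Proof. intros Hh. rewrite exp_Ropp. assert (0 < / h) by (apply Rinv_0_lt_compat; auto).
  assert (Hn : / h <> 0) by (apply Rgt_not_eq; lra). assert (T := exp_ineq1 (/ h) Hn). assert (0 < exp (/ h)) by apply exp_pos.
  assert (Hf : / exp (/h) < / (/h)) by (apply Rinv_lt_contravar; [apply Rmult_lt_0_compat; auto| lra]).
  rewrite Rinv_inv in Hf. exact Hf. Qed.

Lemma exp_pos' h : 0 < exp (- / h).
Proof. apply exp_pos. Qed.

Section Aux.
Variable d : nat.
Variable Om : Rd d -> Prop.

Lemma near_max (w : Clos Om -> R) B e (y0 : Clos Om) : 0 < e -> (forall y, w y <= B) -> exists ym, forall y, w y <= w ym + e.
Proof. intros He HB. set (E := fun v => exists y, v = w y).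
  destruct (completeness E) as [M [HM1 HM2]]. exists B. intros v [y ->]. auto. exists (w y0), y0; auto.
  apply NNPP. intros Hno. assert (M <= M - e). { apply HM2. intros v [y ->]. apply Rnot_lt_le. intros Hlt.
    apply Hno. exists y. intros y'. assert (w y' <= M) by (apply HM1; exists y'; auto). lra. } lra. Qed.

Lemma near_min (w : Clos Om -> R) B e (y0 : Clos Om) : 0 < e -> (forall y, B <= w y) -> exists ym, forall y, w ym - e <= w y.
Proof. intros He HB. destruct (near_max (fun y => - w y) (- B) e y0 He) as [ym Hym]. intros y; specialize (HB y); lra.
  exists ym. intros y. specialize (Hym y). lra. Qed.

Lemma C2c_shift phi Dphi D2phi a : C2_closure Om phi Dphi D2phi -> C2_closure Om (fun y => phi y + a) Dphi D2phi.
Proof. intros [U [HU [HcU HC]]]. exists U. split; [auto|split; [auto|]]. intros x Hx. apply (C2_addc phi Dphi D2phi x a). apply HC; auto. Qed.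

Lemma C2c_ct phi Dphi D2phi (x : Rd d) : C2_closure Om phi Dphi D2phi -> closure Om x -> ct phi x.
Proof. intros [U [HU [HcU HC]]] Hx. apply (fr_ct phi (proj1_sig (Dphi x))). apply HC. auto. Qed.
End Aux.
Arguments near_max {d Om}. Arguments near_min {d Om}. Arguments C2c_shift {d Om}. Arguments C2c_ct {d Om}.

Section Sub.
Variable d : nat.
Variable Om : Rd d -> Prop.
Variable F : Clos Om -> R -> Rd d -> Sym d -> R -> R.
Variable I : (Clos Om -> R) -> (Clos Om -> R).
Variable S : R -> Clos Om -> (Clos Om -> R) -> R -> R.
Variable Ih : R -> (Clos Om -> R) -> (Clos Om -> R).
Variable Vh : R -> Clos Om -> R.
Variable C : R.
Hypothesis HC : forall h x, 0 < h -> Rabs (Vh h x) <= C.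
Hypothesis Hmono : monotone S.
Hypothesis Hcons : nonloc_consistent F I S Ih.
Hypothesis HT : condT S.
Hypothesis Hsol : forall h, 0 < h -> scheme_sol S Ih h (Vh h).

Lemma ind_cases (x y : Clos Om) : (y = x /\ Defs.ind x y = 1) \/ (y <> x /\ Defs.ind x y = 0).
Proof. unfold Defs.ind. destruct (excluded_middle_informative (y = x)); auto. Qed.

Theorem sub_thm : visc_sub F I (hr_sup Vh).
Proof.
  split. apply (hr_sup_usc d Om Vh C HC).
  intros phi Dphi D2phi Hphi x [r0 [Hr0 Hmax]].
  set (x0 := proj1_sig x).
  assert (HC0 : 0 <= C) by (assert (T := HC 1 x Rlt_0_1); assert (0 <= Rabs (Vh 1 x)) by apply Rabs_pos; lra).
  assert (HVbx := hr_sup_bound d Om Vh C HC x).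
  set (Vbx := hr_sup Vh x) in HVbx.
  set (a := Vbx - phi x0). set (phi1 := fun y => phi y + a).
  assert (Hphi1 : C2_closure Om phi1 Dphi D2phi) by (apply C2c_shift; auto).
  assert (Hp1x : phi1 x0 = Vbx) by (unfold phi1, a; ring).
  assert (Hmax1 : forall y, cdist y x < r0 -> hr_sup Vh y <= phi1 (proj1_sig y)).
  { intros y Hy. specialize (Hmax y Hy). cbv beta in Hmax. unfold phi1, a. fold x0 in Hmax. fold Vbx in Hmax. lra. }
  assert (Hct : forall z : Clos Om, ct phi1 (proj1_sig z)) by (intros z; apply (C2c_ct phi1 Dphi D2phi _ Hphi1 (proj2_sig z))).
  destruct (Hct x 1 Rlt_0_1) as [dc [Hdc Hcx]]. fold x0 in Hcx.
  set (rho := Rmin (r0/2) (dc/2)).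
  assert (Hrho : 0 < rho) by (apply Rmin_pos; lra).
  assert (Hrho1 : rho < r0) by (assert (rho <= r0/2) by apply Rmin_l; lra).
  assert (Hrho2 : rho < dc) by (assert (rho <= dc/2) by apply Rmin_r; lra).
  set (k := / rho ^ 4). assert (Hk : 0 < k) by (apply Rinv_0_lt_compat; apply pow_lt; auto).
  set (K := C + Rabs Vbx + 2).
  assert (HVb := abs_le_inv _ _ HVbx).
  destruct (test_fn Om phi1 Dphi D2phi x0 k K Hphi1 (Rlt_le _ _ Hk)) as [Dpsi [D2psi [Hpsi [EDpsi ED2psi]]]].
  set (psi := fun y => theta x0 k y * (phi1 y + - K) + K) in Hpsi.
  assert (P1 : psi x0 = Vbx) by (unfold psi; rewrite theta_x0; rewrite Hp1x; ring).
  assert (P2 : forall y, rho <= vdist y x0 -> psi y = K) by (intros y Hy; unfold psi, k; rewrite theta_far by auto; ring).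
  assert (P3 : forall y, vdist y x0 < rho -> phi1 y + (1 - theta x0 k y) <= psi y /\ Vbx - 1 < phi1 y < Vbx + 1).
  { intros y Hy. assert (T := Hcx y ltac:(lra)). rewrite Hp1x in T. apply abs_lt_inv in T.
    assert (T2 := theta_range x0 k y (Rlt_le _ _ Hk)). split; [|lra].
    unfold psi. assert (0 <= Rabs Vbx) by apply Rabs_pos.
    assert (0 <= (1 - theta x0 k y) * (K - phi1 y - 1)) by (apply Rmult_le_pos; unfold K; lra). nra. }
  assert (P4 : forall y, Vbx - 1 <= psi y <= K).
  { intros y. destruct (Rlt_le_dec (vdist y x0) rho) as [Hy|Hy].
    - destruct (P3 y Hy) as [Q1 Q2]. assert (T2 := theta_range x0 k y (Rlt_le _ _ Hk)). split. lra.
      unfold psi. assert (0 <= Rabs Vbx) by apply Rabs_pos. assert (0 <= theta x0 k y * (K - phi1 y)) by (apply Rmult_le_pos; unfold K; lra). nra.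
    - rewrite P2 by auto. assert (0 <= Rabs Vbx) by apply Rabs_pos. unfold K. lra. }
  assert (P5 : ct psi x0) by (apply (C2c_ct psi Dpsi D2psi x0 Hpsi (proj2_sig x))).
  assert (UC : forall eps, 0 < eps -> exists h1, 0 < h1 /\ forall h y, 0 < h < h1 -> cdist y x < rho -> Vh h y - phi1 (proj1_sig y) < eps).
  { intros eps He. apply (unif_lemma d Om x rho (fun h y => Vh h y - phi1 (proj1_sig y) < eps)); auto.
    intros z Hz. assert (Hmz := Hmax1 z ltac:(lra)).
    destruct (proj1 (hr_sup_spec d Om Vh C HC z) (eps/2)) as [d2 [Hd2 H2]]; [lra|].
    destruct (Hct z (eps/2)) as [d3 [Hd3 H3]]; [lra|].
    exists (Rmin d2 d3). split. apply Rmin_pos; auto. intros h y Hh Hy.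
    assert (A2 : near_hy z d2 (h, y)). { unfold near_hy. simpl. split. split; [lra|]. eapply Rlt_le_trans; [apply Hh| apply Rmin_l].
      eapply Rlt_le_trans; [apply Hy| apply Rmin_l]. }
    specialize (H2 _ A2). simpl in H2.
    assert (A3 : vdist (proj1_sig y) (proj1_sig z) < d3) by (eapply Rlt_le_trans; [apply Hy| apply Rmin_r]).
    specialize (H3 _ A3). apply abs_lt_inv in H3. lra. }
  enough (Goal : Flower F x (psi x0) (Dpsi x0) (D2psi x0) (I (hr_sup Vh) x) <= 0) by
    (rewrite P1, EDpsi, ED2psi in Goal; exact Goal).
  destruct (Hcons Vh (ex_intro _ C HC) psi Dpsi D2psi Hpsi x) as [HL _]. fold x0 in HL.
  set (Phi := Flower F x (psi x0) (Dpsi x0) (D2psi x0) (I (hr_sup Vh) x)) in *.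
  apply Rnot_lt_le. intros HPhi.
  destruct (HL (Phi/2)) as [dL [HdL HLw]]; [lra|].
  destruct HT as [f [Hf0 [Hf1 Hf2]]].
  destruct (Hf1 x (Phi/2)) as [df [Hdf Hfw]]; [lra|].
  set (tau := Rmin dL df). assert (Htau : 0 < tau) by (apply Rmin_pos; auto).
  assert (Htau1 : tau <= dL) by apply Rmin_l. assert (Htau2 : tau <= df) by apply Rmin_r.
  set (m := Rmin 1 (k * tau ^ 4)). assert (Hm : 0 < m) by (apply Rmin_pos; [lra| apply Rmult_lt_0_compat; auto; apply pow_lt; auto]).
  set (eta := Rmin (Rmin (1/8) (tau/4)) (m / 8)).
  assert (He1 : eta <= 1/8) by (eapply Rle_trans; [apply Rmin_l| apply Rmin_l]).
  assert (He2 : eta <= tau/4) by (eapply Rle_trans; [apply Rmin_l| apply Rmin_r]).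
  assert (He3 : eta <= m/8) by apply Rmin_r.
  assert (He0 : 0 < eta) by (repeat apply Rmin_pos; lra).
  destruct (UC eta He0) as [h1 [Hh1 HU]].
  destruct (P5 eta He0) as [dp [Hdp HP5]].
  assert (Hpos : 0 < Rmin (Rmin h1 dp) (Rmin tau eta)) by (apply Rmin_pos; apply Rmin_pos; auto).
  destruct (proj2 (hr_sup_spec d Om Vh C HC x) eta (Rmin (Rmin h1 dp) (Rmin tau eta)) He0 Hpos) as [[h z] [[Hh Hz] Hvz]].
  simpl in Hh, Hz, Hvz. fold Vbx in Hvz.
  assert (Hhh1 : h < h1) by (eapply Rlt_le_trans; [apply Hh|]; eapply Rle_trans; [apply Rmin_l| apply Rmin_l]).
  assert (Hhtau : h < tau) by (eapply Rlt_le_trans; [apply Hh|]; eapply Rle_trans; [apply Rmin_r| apply Rmin_l]).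
  assert (Hheta : h < eta) by (eapply Rlt_le_trans; [apply Hh|]; eapply Rle_trans; [apply Rmin_r| apply Rmin_r]).
  assert (Hzdp : cdist z x < dp) by (eapply Rlt_le_trans; [apply Hz|]; eapply Rle_trans; [apply Rmin_l| apply Rmin_r]).
  specialize (HP5 (proj1_sig z) Hzdp). rewrite P1 in HP5. apply abs_lt_inv in HP5.
  assert (Hh0 : 0 < h) by lra.
  set (e := exp (- / h)). assert (Hee : 0 < e) by apply exp_pos. assert (Hee2 : e < h) by apply exp_small, Hh0.
  set (w := fun y : Clos Om => Vh h y - psi (proj1_sig y)).
  destruct (near_max w (C - (Vbx - 1)) e x Hee) as [ym Hym].
  { intros y. unfold w. assert (T := HC h y Hh0). apply abs_le_inv in T. assert (T2 := P4 (proj1_sig y)). lra. }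
  set (xi := w ym + e).
  assert (Hlow : - 3 * eta < w ym).
  { assert (T := Hym z). unfold w in T |- *. lra. }
  assert (Hloc : vdist (proj1_sig ym) x0 < rho).
  { apply Rnot_le_lt. intros Hge. assert (T := P2 _ Hge). assert (T2 := HC h ym Hh0). apply abs_le_inv in T2.
    unfold w in Hlow. rewrite T in Hlow. unfold K in Hlow. assert (0 <= Rabs Vbx) by apply Rabs_pos. lra. }
  assert (HUy := HU h ym ltac:(lra) Hloc).
  destruct (P3 _ Hloc) as [Q1 _].
  assert (Hth : 1 - theta x0 k (proj1_sig ym) < 4 * eta) by (unfold w in Hlow; lra).
  assert (Hnear : vdist (proj1_sig ym) x0 < tau).
  { apply Rnot_le_lt. intros Hge. assert (T := theta_gap x0 (proj1_sig ym) k tau (Rlt_le _ _ Hk) Htau Hge). fold m in T. lra. }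
  assert (Hxi : Rabs xi < tau).
  { assert (T2 := theta_range x0 k (proj1_sig ym) (Rlt_le _ _ Hk)).
    apply abs_lt_intro. unfold xi. unfold w in Hlow |- *. split; lra. }
  assert (Hcd : cdist ym x < tau) by exact Hnear.
  assert (HLG := HLw (h, ym, xi) ltac:(unfold near_hyxi; repeat split; lra)).
  cbv beta iota in HLG.
  assert (Hfy := Hfw h ym ltac:(lra) ltac:(lra)).
  set (l := Ih h (Vh h) ym) in *.
  set (V := fun z : Clos Om => psi (proj1_sig z) + xi) in *.
  set (W := fun y : Clos Om => Vh h y + 1 * exp (- / h) * Defs.ind ym y).
  assert (HbVh : bnd (Vh h)) by (exists C; intros; apply HC; auto).
  assert (Hmon := Hmono h ym V W l Hh0).
  assert (HVW : S h ym V l <= S h ym W l).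
  { apply Hmon.
    - exists (K + Rabs Vbx + 1 + Rabs xi). intros y. unfold V. apply abs_le_intro. assert (T := P4 (proj1_sig y)).
      assert (T2 := Rabs_pos Vbx). assert (T3 := Rle_abs xi). assert (T4 := Rle_abs (- xi)). rewrite Rabs_Ropp in T4.
      assert (T5 := Rle_abs Vbx). assert (T6 := Rle_abs (- Vbx)). rewrite Rabs_Ropp in T6. unfold K in *. split; lra.
    - exists (C + e). intros y. unfold W. fold e. apply abs_le_intro. assert (T := HC h y Hh0). apply abs_le_inv in T.
      destruct (ind_cases ym y) as [[_ ->]|[_ ->]]; split; lra.
    - intros y. unfold W, V. fold e. destruct (ind_cases ym y) as [[-> ->]|[_ ->]].
      + unfold xi, w. lra.
      + assert (T := Hym y). unfold xi, w in *. lra.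
    - unfold W, V. fold e. destruct (ind_cases ym ym) as [[_ ->]|[Hn _]]; [|congruence]. unfold xi, w. lra. }
  assert (HTf := Hf2 h ym l (Vh h) 1 Hh0 HbVh (or_introl eq_refl)). fold W in HTf.
  assert (Hs0 : S h ym (Vh h) l = 0) by (apply (proj2 (Hsol h Hh0))).
  apply abs_le_inv in HTf. fold V in HLG. lra.
Qed.
End Sub.

Section Super.
Variable d : nat.
Variable Om : Rd d -> Prop.
Variable F : Clos Om -> R -> Rd d -> Sym d -> R -> R.
Variable I : (Clos Om -> R) -> (Clos Om -> R).
Variable S : R -> Clos Om -> (Clos Om -> R) -> R -> R.
Variable Ih : R -> (Clos Om -> R) -> (Clos Om -> R).
Variable Vh : R -> Clos Om -> R.
Variable C : R.
Hypothesis HC : forall h x, 0 < h -> Rabs (Vh h x) <= C.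
Hypothesis Hmono : monotone S.
Hypothesis Hcons : nonloc_consistent F I S Ih.
Hypothesis HT : condT S.
Hypothesis Hsol : forall h, 0 < h -> scheme_sol S Ih h (Vh h).




Theorem super_thm : visc_super F I (hr_inf Vh).
Proof.
  split. apply (hr_inf_lsc d Om Vh C HC).
  intros phi Dphi D2phi Hphi x [r0 [Hr0 Hmin]].
  set (x0 := proj1_sig x).
  assert (HC0 : 0 <= C) by (assert (T := HC 1 x Rlt_0_1); assert (0 <= Rabs (Vh 1 x)) by apply Rabs_pos; lra).
  assert (HVbx := hr_inf_bound d Om Vh C HC x).
  set (Vbx := hr_inf Vh x) in HVbx.
  set (a := Vbx - phi x0). set (phi1 := fun y => phi y + a).
  assert (Hphi1 : C2_closure Om phi1 Dphi D2phi) by (apply C2c_shift; auto).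
  assert (Hp1x : phi1 x0 = Vbx) by (unfold phi1, a; ring).
  assert (Hmin1 : forall y, cdist y x < r0 -> phi1 (proj1_sig y) <= hr_inf Vh y).
  { intros y Hy. specialize (Hmin y Hy). cbv beta in Hmin. unfold phi1, a. fold x0 in Hmin. fold Vbx in Hmin. lra. }
  assert (Hct : forall z : Clos Om, ct phi1 (proj1_sig z)) by (intros z; apply (C2c_ct phi1 Dphi D2phi _ Hphi1 (proj2_sig z))).
  destruct (Hct x 1 Rlt_0_1) as [dc [Hdc Hcx]]. fold x0 in Hcx.
  set (rho := Rmin (r0/2) (dc/2)).
  assert (Hrho : 0 < rho) by (apply Rmin_pos; lra).
  assert (Hrho1 : rho < r0) by (assert (rho <= r0/2) by apply Rmin_l; lra).
  assert (Hrho2 : rho < dc) by (assert (rho <= dc/2) by apply Rmin_r; lra).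
  set (k := / rho ^ 4). assert (Hk : 0 < k) by (apply Rinv_0_lt_compat; apply pow_lt; auto).
  set (K := - (C + Rabs Vbx + 2)).
  assert (HVb := abs_le_inv _ _ HVbx).
  destruct (test_fn Om phi1 Dphi D2phi x0 k K Hphi1 (Rlt_le _ _ Hk)) as [Dpsi [D2psi [Hpsi [EDpsi ED2psi]]]].
  set (psi := fun y => theta x0 k y * (phi1 y + - K) + K) in Hpsi.
  assert (P1 : psi x0 = Vbx) by (unfold psi; rewrite theta_x0; rewrite Hp1x; ring).
  assert (P2 : forall y, rho <= vdist y x0 -> psi y = K) by (intros y Hy; unfold psi, k; rewrite theta_far by auto; ring).
  assert (P3 : forall y, vdist y x0 < rho -> psi y <= phi1 y - (1 - theta x0 k y) /\ Vbx - 1 < phi1 y < Vbx + 1).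
  { intros y Hy. assert (T := Hcx y ltac:(lra)). rewrite Hp1x in T. apply abs_lt_inv in T.
    assert (T2 := theta_range x0 k y (Rlt_le _ _ Hk)). split; [|lra].
    unfold psi. assert (0 <= Rabs Vbx) by apply Rabs_pos.
    assert (0 <= (1 - theta x0 k y) * (phi1 y - K - 1)) by (apply Rmult_le_pos; unfold K; lra). nra. }
  assert (P4 : forall y, K <= psi y <= Vbx + 1).
  { intros y. destruct (Rlt_le_dec (vdist y x0) rho) as [Hy|Hy].
    - destruct (P3 y Hy) as [Q1 Q2]. assert (T2 := theta_range x0 k y (Rlt_le _ _ Hk)). split; [|lra].
      unfold psi. assert (0 <= Rabs Vbx) by apply Rabs_pos. assert (0 <= theta x0 k y * (phi1 y - K)) by (apply Rmult_le_pos; unfold K; lra). nra.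
    - rewrite P2 by auto. assert (0 <= Rabs Vbx) by apply Rabs_pos. unfold K. lra. }
  assert (P5 : ct psi x0) by (apply (C2c_ct psi Dpsi D2psi x0 Hpsi (proj2_sig x))).
  assert (UC : forall eps, 0 < eps -> exists h1, 0 < h1 /\ forall h y, 0 < h < h1 -> cdist y x < rho -> - eps < Vh h y - phi1 (proj1_sig y)).
  { intros eps He. apply (unif_lemma d Om x rho (fun h y => - eps < Vh h y - phi1 (proj1_sig y))); auto.
    intros z Hz. assert (Hmz := Hmin1 z ltac:(lra)).
    destruct (proj1 (hr_inf_spec d Om Vh C HC z) (eps/2)) as [d2 [Hd2 H2]]; [lra|].
    destruct (Hct z (eps/2)) as [d3 [Hd3 H3]]; [lra|].
    exists (Rmin d2 d3). split. apply Rmin_pos; auto. intros h y Hh Hy.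
    assert (A2 : near_hy z d2 (h, y)). { unfold near_hy. simpl. split. split; [lra|]. eapply Rlt_le_trans; [apply Hh| apply Rmin_l].
      eapply Rlt_le_trans; [apply Hy| apply Rmin_l]. }
    specialize (H2 _ A2). simpl in H2.
    assert (A3 : vdist (proj1_sig y) (proj1_sig z) < d3) by (eapply Rlt_le_trans; [apply Hy| apply Rmin_r]).
    specialize (H3 _ A3). apply abs_lt_inv in H3. lra. }
  enough (Goal : Fupper F x (psi x0) (Dpsi x0) (D2psi x0) (I (hr_inf Vh) x) >= 0) by
    (rewrite P1, EDpsi, ED2psi in Goal; exact Goal).
  destruct (Hcons Vh (ex_intro _ C HC) psi Dpsi D2psi Hpsi x) as [_ HL]. fold x0 in HL.
  set (Phi := Fupper F x (psi x0) (Dpsi x0) (D2psi x0) (I (hr_inf Vh) x)) in *.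
  apply Rle_ge. apply Rnot_lt_le. intros HPhi.
  destruct (HL (- Phi/2)) as [dL [HdL HLw]]; [lra|].
  destruct HT as [f [Hf0 [Hf1 Hf2]]].
  destruct (Hf1 x (- Phi/2)) as [df [Hdf Hfw]]; [lra|].
  set (tau := Rmin dL df). assert (Htau : 0 < tau) by (apply Rmin_pos; auto).
  assert (Htau1 : tau <= dL) by apply Rmin_l. assert (Htau2 : tau <= df) by apply Rmin_r.
  set (m := Rmin 1 (k * tau ^ 4)). assert (Hm : 0 < m) by (apply Rmin_pos; [lra| apply Rmult_lt_0_compat; auto; apply pow_lt; auto]).
  set (eta := Rmin (Rmin (1/8) (tau/4)) (m / 8)).
  assert (He1 : eta <= 1/8) by (eapply Rle_trans; [apply Rmin_l| apply Rmin_l]).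
  assert (He2 : eta <= tau/4) by (eapply Rle_trans; [apply Rmin_l| apply Rmin_r]).
  assert (He3 : eta <= m/8) by apply Rmin_r.
  assert (He0 : 0 < eta) by (repeat apply Rmin_pos; lra).
  destruct (UC eta He0) as [h1 [Hh1 HU]].
  destruct (P5 eta He0) as [dp [Hdp HP5]].
  assert (Hpos : 0 < Rmin (Rmin h1 dp) (Rmin tau eta)) by (apply Rmin_pos; apply Rmin_pos; auto).
  destruct (proj2 (hr_inf_spec d Om Vh C HC x) eta (Rmin (Rmin h1 dp) (Rmin tau eta)) He0 Hpos) as [[h z] [[Hh Hz] Hvz]].
  simpl in Hh, Hz, Hvz. fold Vbx in Hvz.
  assert (Hhh1 : h < h1) by (eapply Rlt_le_trans; [apply Hh|]; eapply Rle_trans; [apply Rmin_l| apply Rmin_l]).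
  assert (Hhtau : h < tau) by (eapply Rlt_le_trans; [apply Hh|]; eapply Rle_trans; [apply Rmin_r| apply Rmin_l]).
  assert (Hheta : h < eta) by (eapply Rlt_le_trans; [apply Hh|]; eapply Rle_trans; [apply Rmin_r| apply Rmin_r]).
  assert (Hzdp : cdist z x < dp) by (eapply Rlt_le_trans; [apply Hz|]; eapply Rle_trans; [apply Rmin_l| apply Rmin_r]).
  specialize (HP5 (proj1_sig z) Hzdp). rewrite P1 in HP5. apply abs_lt_inv in HP5.
  assert (Hh0 : 0 < h) by lra.
  set (e := exp (- / h)). assert (Hee : 0 < e) by apply exp_pos. assert (Hee2 : e < h) by apply exp_small, Hh0.
  set (w := fun y : Clos Om => Vh h y - psi (proj1_sig y)).
  destruct (near_min w (- C - (Vbx + 1)) e x Hee) as [ym Hym].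
  { intros y. unfold w. assert (T := HC h y Hh0). apply abs_le_inv in T. assert (T2 := P4 (proj1_sig y)). lra. }
  set (xi := w ym - e).
  assert (Hup : w ym < 3 * eta).
  { assert (T := Hym z). unfold w in T |- *. lra. }
  assert (Hloc : vdist (proj1_sig ym) x0 < rho).
  { apply Rnot_le_lt. intros Hge. assert (T := P2 _ Hge). assert (T2 := HC h ym Hh0). apply abs_le_inv in T2.
    unfold w in Hup. rewrite T in Hup. unfold K in Hup. assert (0 <= Rabs Vbx) by apply Rabs_pos. lra. }
  assert (HUy := HU h ym ltac:(lra) Hloc).
  destruct (P3 _ Hloc) as [Q1 _].
  assert (Hth : 1 - theta x0 k (proj1_sig ym) < 4 * eta) by (unfold w in Hup; lra).
  assert (Hnear : vdist (proj1_sig ym) x0 < tau).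
  { apply Rnot_le_lt. intros Hge. assert (T := theta_gap x0 (proj1_sig ym) k tau (Rlt_le _ _ Hk) Htau Hge). fold m in T. lra. }
  assert (Hxi : Rabs xi < tau).
  { assert (T2 := theta_range x0 k (proj1_sig ym) (Rlt_le _ _ Hk)).
    apply abs_lt_intro. unfold xi. unfold w in Hup |- *. split; lra. }
  assert (Hcd : cdist ym x < tau) by exact Hnear.
  assert (HLG := HLw (h, ym, xi) ltac:(unfold near_hyxi; repeat split; lra)).
  cbv beta iota in HLG.
  assert (Hfy := Hfw h ym ltac:(lra) ltac:(lra)).
  set (l := Ih h (Vh h) ym) in *.
  set (V := fun z : Clos Om => psi (proj1_sig z) + xi) in *.
  set (W := fun y : Clos Om => Vh h y + -1 * exp (- / h) * Defs.ind ym y).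
  assert (HbVh : bnd (Vh h)) by (exists C; intros; apply HC; auto).
  assert (Hmon := Hmono h ym W V l Hh0).
  assert (HVW : S h ym W l <= S h ym V l).
  { apply Hmon.
    - exists (C + e). intros y. unfold W. fold e. apply abs_le_intro. assert (T := HC h y Hh0). apply abs_le_inv in T.
      destruct (ind_cases d Om ym y) as [[_ ->]|[_ ->]]; split; lra.
    - exists (- K + Rabs Vbx + 1 + Rabs xi). intros y. unfold V. apply abs_le_intro. assert (T := P4 (proj1_sig y)).
      assert (T2 := Rabs_pos Vbx). assert (T3 := Rle_abs xi). assert (T4 := Rle_abs (- xi)). rewrite Rabs_Ropp in T4.
      assert (T5 := Rle_abs Vbx). assert (T6 := Rle_abs (- Vbx)). rewrite Rabs_Ropp in T6. unfold K in *. split; lra.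
    - intros y. unfold W, V. fold e. destruct (ind_cases d Om ym y) as [[-> ->]|[_ ->]].
      + unfold xi, w. lra.
      + assert (T := Hym y). unfold xi, w in *. lra.
    - unfold W, V. fold e. destruct (ind_cases d Om ym ym) as [[_ ->]|[Hn _]]; [|congruence]. unfold xi, w. lra. }
  assert (HTf := Hf2 h ym l (Vh h) (-1) Hh0 HbVh (or_intror eq_refl)). fold W in HTf.
  assert (Hs0 : S h ym (Vh h) l = 0) by (apply (proj2 (Hsol h Hh0))).
  apply abs_le_inv in HTf. fold V in HLG. lra.
Qed.
End Super.

Theorem theorem4p11 (d : nat) (Om : Rd d -> Prop)
  (F : Clos Om -> R -> Rd d -> Sym d -> R -> R)
  (I : (Clos Om -> R) -> (Clos Om -> R))
  (S : R -> Clos Om -> (Clos Om -> R) -> R -> R)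
  (Ih : R -> (Clos Om -> R) -> (Clos Om -> R))
  (Vh : R -> Clos Om -> R) :
  locally_bounded F ->
  comparison F I ->
  monotone S ->
  stable S Ih ->
  nonloc_consistent F I S Ih ->
  condT S ->
  (forall h, 0 < h -> scheme_sol S Ih h (Vh h)) ->
  exists V : Clos Om -> R,
    bnd V /\ visc_sol F I V /\
    (forall W : Clos Om -> R, bnd W -> visc_sol F I W -> forall x, W x = V x) /\
    loc_unif_conv Vh V.
Proof.
  intros _ Hcomp Hmono [C HCs] Hcons HT Hsol.
  assert (HC : forall h x, 0 < h -> Rabs (Vh h x) <= C) by (intros h x Hh; apply (HCs h (Vh h) Hh (Hsol h Hh))).
  assert (Hsub := sub_thm d Om F I S Ih Vh C HC Hmono Hcons HT Hsol).
  assert (Hsup := super_thm d Om F I S Ih Vh C HC Hmono Hcons HT Hsol).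
  assert (Hb1 : bnd (hr_sup Vh)) by (exists C; apply hr_sup_bound; auto).
  assert (Hb2 : bnd (hr_inf Vh)) by (exists C; apply hr_inf_bound; auto).
  assert (Heq : hr_inf Vh = hr_sup Vh).
  { apply functional_extensionality. intros x. apply Rle_antisym. apply (hr_inf_le_sup d Om Vh C HC).
    apply (Hcomp _ _ Hb1 Hb2 Hsub Hsup). }
  exists (hr_sup Vh). split; [auto|]. split; [split; [auto| rewrite <- Heq; auto]|]. split.
  - intros W HW [HW1 HW2] x. apply Rle_antisym.
    apply (Hcomp _ _ HW Hb1 HW1). rewrite <- Heq; auto.
    apply (Hcomp _ _ Hb1 HW Hsub HW2).
  - intros x. exists 1. split; [lra|]. intros eps He.
    apply (unif_lemma d Om x 1 (fun h y => Rabs (Vh h y - hr_sup Vh y) < eps)); [lra|].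
    intros z _.
    destruct (proj1 (hr_sup_spec d Om Vh C HC z) (eps/3)) as [d2 [Hd2 H2]]; [lra|].
    destruct (proj1 (hr_inf_spec d Om Vh C HC z) (eps/3)) as [d3 [Hd3 H3]]; [lra|].
    destruct (hr_sup_usc d Om Vh C HC z (eps/3)) as [d4 [Hd4 H4]]; [lra|].
    destruct (hr_inf_lsc d Om Vh C HC z (eps/3)) as [d5 [Hd5 H5]]; [lra|].
    rewrite Heq in H3, H5.
    exists (Rmin (Rmin d2 d3) (Rmin d4 d5)). split. repeat apply Rmin_pos; auto.
    intros h y Hh Hy.
    assert (A2 : near_hy z d2 (h, y)). { unfold near_hy. simpl. split. split; [lra|].
      eapply Rlt_le_trans; [apply Hh|]; eapply Rle_trans; [apply Rmin_l| apply Rmin_l].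
      eapply Rlt_le_trans; [apply Hy|]; eapply Rle_trans; [apply Rmin_l| apply Rmin_l]. }
    assert (A3 : near_hy z d3 (h, y)). { unfold near_hy. simpl. split. split; [lra|].
      eapply Rlt_le_trans; [apply Hh|]; eapply Rle_trans; [apply Rmin_l| apply Rmin_r].
      eapply Rlt_le_trans; [apply Hy|]; eapply Rle_trans; [apply Rmin_l| apply Rmin_r]. }
    assert (A4 : cdist y z < d4) by (eapply Rlt_le_trans; [apply Hy|]; eapply Rle_trans; [apply Rmin_r| apply Rmin_l]).
    assert (A5 : cdist y z < d5) by (eapply Rlt_le_trans; [apply Hy|]; eapply Rle_trans; [apply Rmin_r| apply Rmin_r]).
    specialize (H2 _ A2). specialize (H3 _ A3). specialize (H4 _ A4). specialize (H5 _ A5). simpl in H2, H3.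
    apply abs_lt_intro. split; lra.
Qed.
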